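(* Let $A\in\mathrm{Seq}_{r,t}$ and let $i$ be an index with $a_i\neq a_{i+1}$. Then there is a power series $W_i^{(A)}(u)\in\mathbb C[y_1,\dots,y_{i-1}][[u^{-1}]]$ such that $$e_i^{(A)}\frac{1}{u-y_i}e_i^{(A)}=\frac{W_i^{(A)}(u)}{u}e_i^{(A)}$$ in $\operatorname{End}(A)[[u^{-1}]]$. Moreover $W_i^{(A)}$ depends only on $(a_1,\dots,a_i)$: if $A,A'\in\mathrm{Seq}_{r,t}$ with $a_i\ne a_{i+1}$, $a'_i\neq a'_{i+1}$ and $a_j=a'_j$ for all $j\le i$, then $W_i^{(A)}=W_i^{(A')}$.
   Context: Let $r,t\in\mathbb N$. An $(r,t)$-sequence is a sequence $A=(a_1,\dots,a_{r+t})$ that is a permutation of $(1,\dots,1,-1,\dots,-1)$ ($r$ entries $1$, $t$ entries $-1$); $\mathrm{Seq}_{r,t}$ is the set of these, and the simple transpositions $\mathsf s_j=(j,j+1)$ of $S_{r+t}$ act on it by permuting entries. Fix complex numbers $\boldsymbol\omega=(\omega_k)_{k\in\mathbb N}$. The degenerate affine walled Brauer category $\underline{\mathrm{VB}}_{r,t}(\boldsymbol\omega)$ is the $\mathbb C$-linear category with object set $\mathrm{Seq}_{r,t}$ whose morphisms are generated by: endomorphisms $s_i^{(A)}$ of $A$ for $1\le i\le r+t-1$ with $a_i=a_{i+1}$; endomorphisms $e_i^{(A)}$ of $A$ for $1\le i\le r+t-1$ with $a_i\neq a_{i+1}$; endomorphisms $y_i^{(A)}$ of $A$ for $1\le i\le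 r+t$; and morphisms $\hat s_j^{(A)},\hat e_j^{(A)}:A\to\mathsf s_jA$ whenever $\mathsf s_jA\ne A$. Superscripts are usually omitted; composition $fg$ means $g$ first. A symbol $\dot s_i$ stands for $s_i$ or $\hat s_i$ and $\dot e_i$ for $e_i$ or $\hat e_i$; each relation is imposed for all objects and all choices of dotted symbols (possibly different on the two sides) for which both sides are defined morphisms with the same source and target. Relations: (1) $\dot s_i\dot s_i=1$; (2) $\dot s_i\dot s_j=\dot s_j\dot s_i$ for $|i-j|>1$, $\dot s_i\dot s_{i+1}\dot s_i=\dot s_{i+1}\dot s_i\dot s_{i+1}$, $\dot s_iy_j=y_j\dot s_i$ for $j\ne i,i+1$; (3) $(e_i^{(A)})^2=\omega_0e_i^{(A)}$; (4) $e_1^{(A)}y_1^ke_1^{(A)}=\omega_ke_1^{(A)}$ for all $k\in\mathbb N$ when $a_1=1,a_2=-1$; (5) $\dot s_i\dot e_j=\dot e_j\dot s_i$ and $\dot e_i\dot e_j=\dot e_j\dot e_i$ for $|i-j|>1$, $\dot e_iy_j=y_j\dot e_i$ for $j\neq i,i+1$, $y_iy_j=y_jy_i$; (6) $\hat s_i\dot e_i=\dot e_i=\dot e_i\hat s_i$, $\dot s_i\dot e_{i+1}\dot e_i=\dot s_{i+1}\dot e_i$, $\dot e_i\dot e_{i+1}\dot s_i=\dot e_i\dot s_{i+1}$, $\dot e_{i+1}\dot e_i\dot s_{i+1}=\dot e_{i+1}\dot s_i$, $\dot s_{i+1}\dot e_i\dot e_{i+1}=\dot s_i\dot e_{i+1}$,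 $\dot e_{i+1}\dot e_i\dot e_{i+1}=\dot e_{i+1}$, $\dot e_i\dot e_{i+1}\dot e_i=\dot e_i$; (7) $s_iy_i-y_{i+1}s_i=-1$, $s_iy_{i+1}-y_is_i=1$, $\hat s_iy_i-y_{i+1}\hat s_i=\hat e_i$, $\hat s_iy_{i+1}-y_i\hat s_i=-\hat e_i$; (8) $\dot e_i(y_i+y_{i+1})=0=(y_i+y_{i+1})\dot e_i$. Power series: $u$ is a formal variable; one works in $\operatorname{End}(A)[[u^{-1}]]$, with $\frac1{u-y}:=\sum_{k\ge0}y^ku^{-k-1}$. *)

(* Defs.v *)
(* The degenerate affine walled Brauer category VB_{r,t}(omega)
   is encoded as a presented CCC-linear category: untyped morphism terms, a
   typing function (source object -> target object), and the least
   congruence [eqv] containing the CCC-linear category axioms and the defining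
   relations (1)-(8).  [eqv r t om A f g] means: f and g are morphisms with
   source A and the same target, and f = g in VB_{r,t}(om). *)
From Stdlib Require Import Reals List ZArith Arith Bool.
Import ListNotations.

Definition CC := (R * R)%type.
Definition C0 : CC := (0%R, 0%R).
Definition C1 : CC := (1%R, 0%R).
Definition Cm1 : CC := ((-1)%R, 0%R).
Definition Cadd (x y : CC) : CC := (fst x + fst y, snd x + snd y)%R.
Definition Cmul (x y : CC) : CC :=
  (fst x * fst y - snd x * snd y, fst x * snd y + snd x * fst y)%R.

Definition in_Seq (r t : nat) (A : list Z) : Prop :=
  length A = r + t /\ Forall (fun x => x = 1%Z \/ x = (-1)%Z) A /\
  count_occ Z.eq_dec A 1%Z = r.

(* 1-based entry a_i *)
Definition ent (A : list Z) (i : nat) : Z := nth (i - 1) A 0%Z.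

(* action of the simple transposition s_i = (i, i+1) (1-based) *)
Definition sw (i : nat) (A : list Z) : list Z :=
  firstn (i - 1) A ++ [ent A (i + 1); ent A i] ++ skipn (i + 1) A.

(* morphism terms.  [Sg i] is the dotted s_i: at an object A it is s_i^(A)
   if a_i = a_{i+1} and \hat s_i^(A) otherwise (exactly one exists).
   [Eg i] = e_i, [HEg i] = \hat e_i, [Yg i] = y_i.
   [Cmp f g] is the composite fg (g first). *)
Inductive tm : Type :=
| Id : tm
| Cmp : tm -> tm -> tm
| Add : tm -> tm -> tm
| Scal : CC -> tm -> tm
| Sg : nat -> tm
| Eg : nat -> tm
| HEg : nat -> tm
| Yg : nat -> tm.

Definition validi (A : list Z) (i : nat) : bool := (1 <=? i) && (i <? length A).

(* target of a term with given source (None = ill-typed / undefined) *)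
Fixpoint tgt (A : list Z) (f : tm) : option (list Z) :=
  match f with
  | Id => Some A
  | Cmp f g => match tgt A g with Some B => tgt B f | None => None end
  | Add f g =>
      match tgt A f, tgt A g with
      | Some B, Some B' => if list_eq_dec Z.eq_dec B B' then Some B else None
      | _, _ => None
      end
  | Scal _ f => tgt A f
  | Sg i => if validi A i then Some (sw i A) else None
  | Eg i => if validi A i && negb (Z.eqb (ent A i) (ent A (i + 1))) then Some A else None
  | HEg i => if validi A i && negb (Z.eqb (ent A i) (ent A (i + 1))) then Some (sw i A) else None
  | Yg i => if (1 <=? i) && (i <=? length A) then Some A else None
  end.

Definition de (b : bool) (i : nat) : tm := if b then HEg i else Eg i.

Fixpoint pw (f : tm) (k : nat) : tm :=
  match k with O => Id | S k' => Cmp f (pw f k') end.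

Definition Sub (f g : tm) : tm := Add f (Scal Cm1 g).

Definition far (i j : nat) : Prop := i + 1 < j \/ j + 1 < i.

(* the defining relations (1)-(8), at source object A; each occurrence of a
   dotted e gets its own independent choice. Instances are only imposed when
   both sides are defined with the same source and target (see [eqv]). *)
Inductive rel (om : nat -> CC) (A : list Z) : tm -> tm -> Prop :=
| r1 i : rel om A (Cmp (Sg i) (Sg i)) Id
| r2a i j : far i j -> rel om A (Cmp (Sg i) (Sg j)) (Cmp (Sg j) (Sg i))
| r2b i : rel om A (Cmp (Sg i) (Cmp (Sg (i+1)) (Sg i)))
                   (Cmp (Sg (i+1)) (Cmp (Sg i) (Sg (i+1))))
| r2c i j : j <> i -> j <> i + 1 -> rel om A (Cmp (Sg i) (Yg j)) (Cmp (Yg j) (Sg i))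
| r3 i : rel om A (Cmp (Eg i) (Eg i)) (Scal (om 0) (Eg i))
| r4 k : ent A 1 = 1%Z -> ent A 2 = (-1)%Z ->
    rel om A (Cmp (Eg 1) (Cmp (pw (Yg 1) k) (Eg 1))) (Scal (om k) (Eg 1))
| r5a i j b b' : far i j -> rel om A (Cmp (Sg i) (de b j)) (Cmp (de b' j) (Sg i))
| r5b i j b1 b2 b3 b4 : far i j ->
    rel om A (Cmp (de b1 i) (de b2 j)) (Cmp (de b3 j) (de b4 i))
| r5c i j b b' : j <> i -> j <> i + 1 ->
    rel om A (Cmp (de b i) (Yg j)) (Cmp (Yg j) (de b' i))
| r5d i j : rel om A (Cmp (Yg i) (Yg j)) (Cmp (Yg j) (Yg i))
| r6a i b b' : rel om A (Cmp (Sg i) (de b i)) (de b' i)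
| r6b i b b' : rel om A (de b i) (Cmp (de b' i) (Sg i))
| r6c i b1 b2 b3 : rel om A (Cmp (Sg i) (Cmp (de b1 (i+1)) (de b2 i)))
                            (Cmp (Sg (i+1)) (de b3 i))
| r6d i b1 b2 b3 : rel om A (Cmp (de b1 i) (Cmp (de b2 (i+1)) (Sg i)))
                            (Cmp (de b3 i) (Sg (i+1)))
| r6e i b1 b2 b3 : rel om A (Cmp (de b1 (i+1)) (Cmp (de b2 i) (Sg (i+1))))
                            (Cmp (de b3 (i+1)) (Sg i))
| r6f i b1 b2 b3 : rel om A (Cmp (Sg (i+1)) (Cmp (de b1 i) (de b2 (i+1))))
                            (Cmp (Sg i) (de b3 (i+1)))
| r6g i b1 b2 b3 b4 : rel om A (Cmp (de b1 (i+1)) (Cmp (de b2 i) (de b3 (i+1))))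
                               (de b4 (i+1))
| r6h i b1 b2 b3 b4 : rel om A (Cmp (de b1 i) (Cmp (de b2 (i+1)) (de b3 i)))
                               (de b4 i)
| r7a i : ent A i = ent A (i+1) ->
    rel om A (Sub (Cmp (Sg i) (Yg i)) (Cmp (Yg (i+1)) (Sg i))) (Scal Cm1 Id)
| r7b i : ent A i = ent A (i+1) ->
    rel om A (Sub (Cmp (Sg i) (Yg (i+1))) (Cmp (Yg i) (Sg i))) Id
| r7c i : ent A i <> ent A (i+1) ->
    rel om A (Sub (Cmp (Sg i) (Yg i)) (Cmp (Yg (i+1)) (Sg i))) (HEg i)
| r7d i : ent A i <> ent A (i+1) ->
    rel om A (Sub (Cmp (Sg i) (Yg (i+1))) (Cmp (Yg i) (Sg i))) (Scal Cm1 (HEg i))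
| r8a i b b' : rel om A (Cmp (de b i) (Add (Yg i) (Yg (i+1)))) (Scal C0 (de b' i))
| r8b i b b' : rel om A (Cmp (Add (Yg i) (Yg (i+1))) (de b i)) (Scal C0 (de b' i)).

Inductive lin_ax : tm -> tm -> Prop :=
| la_idl f : lin_ax (Cmp Id f) f
| la_idr f : lin_ax (Cmp f Id) f
| la_assoc f g h : lin_ax (Cmp f (Cmp g h)) (Cmp (Cmp f g) h)
| la_distl f g h : lin_ax (Cmp f (Add g h)) (Add (Cmp f g) (Cmp f h))
| la_distr f g h : lin_ax (Cmp (Add f g) h) (Add (Cmp f h) (Cmp g h))
| la_scl c f g : lin_ax (Cmp f (Scal c g)) (Scal c (Cmp f g))
| la_scr c f g : lin_ax (Cmp (Scal c f) g) (Scal c (Cmp f g))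
| la_addC f g : lin_ax (Add f g) (Add g f)
| la_addA f g h : lin_ax (Add f (Add g h)) (Add (Add f g) h)
| la_add0 f g : lin_ax (Add f (Scal C0 g)) f
| la_addN f : lin_ax (Add f (Scal Cm1 f)) (Scal C0 f)
| la_sc1 f : lin_ax (Scal C1 f) f
| la_scA x y f : lin_ax (Scal x (Scal y f)) (Scal (Cmul x y) f)
| la_scDl x y f : lin_ax (Scal (Cadd x y) f) (Add (Scal x f) (Scal y f))
| la_scDr x f g : lin_ax (Scal x (Add f g)) (Add (Scal x f) (Scal x g)).

Inductive eqv (r t : nat) (om : nat -> CC) : list Z -> tm -> tm -> Prop :=
| ev_refl A f B : in_Seq r t A -> tgt A f = Some B -> eqv r t om A f f
| ev_sym A f g : eqv r t om A f g -> eqv r t om A g f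
| ev_trans A f g h : eqv r t om A f g -> eqv r t om A g h -> eqv r t om A f h
| ev_cmp A B f f' g g' : eqv r t om A g g' -> tgt A g = Some B ->
    eqv r t om B f f' -> eqv r t om A (Cmp f g) (Cmp f' g')
| ev_add A f f' g g' : eqv r t om A f f' -> eqv r t om A g g' ->
    tgt A f = tgt A g -> eqv r t om A (Add f g) (Add f' g')
| ev_scal A c f f' : eqv r t om A f f' -> eqv r t om A (Scal c f) (Scal c f')
| ev_lin A f g B : in_Seq r t A -> lin_ax f g ->
    tgt A f = Some B -> tgt A g = Some B -> eqv r t om A f g
| ev_rel A f g B : in_Seq r t A -> rel om A f g ->
    tgt A f = Some B -> tgt A g = Some B -> eqv r t om A f g.

(* polynomials in CC[y_1, y_2, ...]: list of (coefficient, exponent vector);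
   exponent vector [n_1; ...; n_m] stands for y_1^n_1 ... y_m^n_m *)
Definition cpoly := list (CC * list nat).

Fixpoint mono_aux (j : nat) (es : list nat) : tm :=
  match es with
  | [] => Id
  | n :: es' => Cmp (pw (Yg j) n) (mono_aux (j + 1) es')
  end.
Definition mono (es : list nat) : tm := mono_aux 1 es.

Definition evalp (p : cpoly) : tm :=
  fold_right (fun ce acc => Add (Scal (fst ce) (mono (snd ce))) acc) (Scal C0 Id) p.

Definition in_vars (p : cpoly) (m : nat) : Prop :=
  Forall (fun ce => length (snd ce) <= m) p.

(* Main.v *)
Require Import Defs.
From Stdlib Require Import List ZArith Arith Lia Bool Permutation Reals Lra IndefiniteDescription.
Import ListNotations.
Require Import Defs.

Lemma validi_dec A i : validi A i = true <-> 1 <= i < length A.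
Proof. unfold validi. rewrite andb_true_iff, Nat.leb_le, Nat.ltb_lt. lia. Qed.

Lemma decomp (A : list Z) i : 1 <= i < length A ->
  exists L x y R, A = L ++ x :: y :: R /\ length L = i - 1.
Proof.
  intros H. exists (firstn (i-1) A), (nth (i-1) A 0%Z), (nth i A 0%Z), (skipn (i+1) A).
  split; [| rewrite length_firstn; lia].
  rewrite <- (firstn_skipn (i-1) A) at 1. f_equal.
  { revert i H. induction A as [|a A IH]; intros i H; simpl in *. lia.
    destruct i as [|[|i]]. lia.
    - simpl. destruct A; simpl in *. lia. reflexivity.
    - simpl. replace (i - 0) with i by lia. specialize (IH (S i)). simpl in IH.
      replace (i-0) with i in IH by lia. apply IH. lia. }
Qed.

Lemma ent_app1 (L M : list Z) l : 1 <= l <= length L -> ent (L ++ M) l = ent L l.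
Proof. intros. unfold ent. apply app_nth1. lia. Qed.
Lemma ent_app2 (L M : list Z) l : length L < l -> ent (L ++ M) l = ent M (l - length L).
Proof. intros. unfold ent. rewrite app_nth2 by lia. f_equal. lia. Qed.

Lemma sw_decomp (L : list Z) x y R : sw (length L + 1) (L ++ x :: y :: R) = L ++ y :: x :: R.
Proof.
  unfold sw. replace (length L + 1 - 1) with (length L) by lia.
  rewrite firstn_app, Nat.sub_diag, firstn_all. simpl. rewrite app_nil_r.
  rewrite ent_app2 by lia. rewrite ent_app2 by lia.
  replace (length L + 1 + 1 - length L) with 2 by lia.
  replace (length L + 1 - length L) with 1 by lia. unfold ent; simpl.
  f_equal. simpl. f_equal. f_equal.
  rewrite skipn_app. replace (length L + 1 + 1 - length L) with 2 by lia.
  rewrite skipn_all2 by lia. reflexivity.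
Qed.

Lemma sw_spec (A : list Z) i : 1 <= i < length A ->
  exists L x y R, A = L ++ x :: y :: R /\ length L = i - 1 /\ sw i A = L ++ y :: x :: R.
Proof.
  intros H. destruct (decomp A i H) as (L & x & y & R & -> & HL).
  exists L, x, y, R. split; [reflexivity|]. split; [exact HL|].
  replace i with (length L + 1) by lia. apply sw_decomp.
Qed.

Lemma ent_L1 (L : list Z) x y R : ent (L ++ x :: y :: R) (length L + 1) = x.
Proof. rewrite ent_app2 by lia. replace (length L + 1 - length L) with 1 by lia. reflexivity. Qed.
Lemma ent_L2 (L : list Z) x y R : ent (L ++ x :: y :: R) (length L + 1 + 1) = y.
Proof. rewrite ent_app2 by lia. replace (length L + 1 + 1 - length L) with 2 by lia. reflexivity. Qed.
Lemma ent_Lo (L : list Z) x y R x' y' l : 1 <= l -> l <> length L + 1 -> l <> length L + 1 + 1 ->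
  ent (L ++ x :: y :: R) l = ent (L ++ x' :: y' :: R) l.
Proof.
  intros. destruct (Nat.le_gt_cases l (length L)).
  - rewrite !ent_app1 by lia. reflexivity.
  - rewrite !ent_app2 by lia. unfold ent. destruct (l - length L) as [|[|[|n]]] eqn:E; try lia.
    simpl. reflexivity.
Qed.

Section SW.
Variable A : list Z.
Variable i : nat.
Hypothesis Hi : 1 <= i < length A.

Lemma sw_len : length (sw i A) = length A.
Proof. destruct (sw_spec A i Hi) as (L&x&y&R&->&HL&->). rewrite !length_app. reflexivity. Qed.

Lemma sw_sw : sw i (sw i A) = A.
Proof. destruct (sw_spec A i Hi) as (L&x&y&R&->&HL&->). replace i with (length L + 1) by lia.
  rewrite sw_decomp. reflexivity. Qed.

Lemma ent_sw_i : ent (sw i A) i = ent A (i+1).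
Proof. destruct (sw_spec A i Hi) as (L&x&y&R&->&HL&->). replace i with (length L + 1) by lia.
  rewrite ent_L1, ent_L2. reflexivity. Qed.
Lemma ent_sw_i1 : ent (sw i A) (i+1) = ent A i.
Proof. destruct (sw_spec A i Hi) as (L&x&y&R&->&HL&->). replace i with (length L + 1) by lia.
  rewrite ent_L1, ent_L2. reflexivity. Qed.
Lemma ent_sw_o l : 1 <= l -> l <> i -> l <> i + 1 -> ent (sw i A) l = ent A l.
Proof. intros. destruct (sw_spec A i Hi) as (L&x&y&R&->&HL&->). apply ent_Lo; lia. Qed.

Lemma sw_same : ent A i = ent A (i+1) -> sw i A = A.
Proof. destruct (sw_spec A i Hi) as (L&x&y&R&->&HL&->). replace i with (length L + 1) by lia.
  rewrite ent_L1, ent_L2. intros ->. reflexivity. Qed.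

Lemma firstn_sw_lt : firstn (i-1) (sw i A) = firstn (i-1) A.
Proof. destruct (sw_spec A i Hi) as (L&x&y&R&->&HL&->). rewrite <- HL, !firstn_app, Nat.sub_diag.
  reflexivity. Qed.

Lemma firstn_sw_i : firstn i (sw i A) = firstn (i-1) A ++ [ent A (i+1)].
Proof. destruct (sw_spec A i Hi) as (L&x&y&R&->&HL&->). replace i with (length L + 1) by lia.
  rewrite ent_L2. replace (length L + 1 - 1) with (length L) by lia.
  rewrite !firstn_app, Nat.sub_diag. replace (length L + 1 - length L) with 1 by lia.
  rewrite (firstn_all2 (n:=length L + 1) L) by lia. rewrite ?firstn_all. simpl. rewrite ?app_nil_r. reflexivity. Qed.

Lemma firstn_i : firstn i A = firstn (i-1) A ++ [ent A i].
Proof. destruct (sw_spec A i Hi) as (L&x&y&R&->&HL&_). replace i with (length L + 1) by lia.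
  rewrite ent_L1. replace (length L + 1 - 1) with (length L) by lia.
  rewrite !firstn_app, Nat.sub_diag. replace (length L + 1 - length L) with 1 by lia.
  rewrite (firstn_all2 (n:=length L + 1) L) by lia. rewrite ?firstn_all. simpl. rewrite ?app_nil_r. reflexivity. Qed.

Lemma sw_perm : Permutation A (sw i A).
Proof. destruct (sw_spec A i Hi) as (L&x&y&R&->&HL&->). apply Permutation_app_head. constructor. Qed.

Lemma in_Seq_sw r t : in_Seq r t A -> in_Seq r t (sw i A).
Proof.
  intros (H1&H2&H3). pose proof sw_perm as P. split; [|split].
  - rewrite <- H1. symmetry. apply Permutation_length. exact P.
  - eapply Permutation_Forall; eauto.
  - rewrite <- H3. symmetry. apply Permutation_count_occ. exact P.
Qed.
End SW.

Lemma ent_pm r t A l : in_Seq r t A -> 1 <= l <= length A -> ent A l = 1%Z \/ ent A l = (-1)%Z.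
Proof.
  intros (_&H&_) Hl. unfold ent. rewrite Forall_forall in H. apply H. apply nth_In. lia.
Qed.

Lemma ent_firstn (A L : list Z) n l : firstn n A = L -> 1 <= l <= n -> n <= length A -> ent A l = ent L l.
Proof. intros H H1 H2. subst L. unfold ent. rewrite nth_firstn. destruct (l - 1 <? n) eqn:E; auto.
  apply Nat.ltb_ge in E. lia. Qed.

Lemma firstn_len_eq (A L : list Z) n : firstn n A = L -> n <= length A -> length L = n.
Proof. intros <- H. rewrite length_firstn. lia. Qed.

Section EQ.
Variables (r t : nat) (om : nat -> CC).
Notation E := (eqv r t om).
Notation S := (in_Seq r t).

Lemma tgt_inSeq f : forall A B, S A -> tgt A f = Some B -> S B.
Proof.
  induction f; intros A B HA H; simpl in H.
  - congruence.
  - destruct (tgt A f2) eqn:E2; [|discriminate]. eauto.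
  - destruct (tgt A f1) eqn:E1; [|discriminate]. destruct (tgt A f2); [|discriminate].
    destruct (list_eq_dec Z.eq_dec l l0); [|discriminate]. inversion H; subst. eauto.
  - eauto.
  - destruct (validi A n) eqn:V; [|discriminate]. inversion H; subst.
    apply in_Seq_sw; auto. apply validi_dec; auto.
  - destruct (validi A n && _); [|discriminate]. congruence.
  - destruct (validi A n) eqn:V; simpl in H; [|discriminate].
    destruct (negb _); [|discriminate]. inversion H; subst.
    apply in_Seq_sw; auto. apply validi_dec; auto.
  - destruct (_ && _); [|discriminate]. congruence.
Qed.

Lemma eqv_tgt A f g : E A f g -> S A /\ exists B, tgt A f = Some B /\ tgt A g = Some B.
Proof.
  induction 1.
  - eauto.
  - destruct IHeqv as (?&B&?&?). eauto.
  - destruct IHeqv1 as (?&B&?&?). destruct IHeqv2 as (?&B'&?&?). split; auto. exists B. split; congruence.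
  - destruct IHeqv1 as (HA&B1&Hg&Hg'). destruct IHeqv2 as (HB&C&Hf&Hf'). split; auto.
    exists C. simpl. rewrite H0. split. auto.
    assert (tgt A g' = Some B) by congruence. rewrite H2. auto.
  - destruct IHeqv1 as (HA&B&Hf&Hf'). destruct IHeqv2 as (HA2&B'&Hg&Hg'). split; auto.
    exists B. simpl. rewrite Hf, Hf', Hg, Hg'. assert (B = B') by congruence. subst.
    destruct (list_eq_dec Z.eq_dec B' B'); [|congruence]. auto.
  - destruct IHeqv as (?&B&?&?). split; auto. exists B. simpl. auto.
  - eauto.
  - eauto.
Qed.

Lemma E_S A f g : E A f g -> S A.
Proof. intros H. apply eqv_tgt in H. tauto. Qed.

Lemma E_refl A f B : S A -> tgt A f = Some B -> E A f f.
Proof. intros. eapply ev_refl; eauto. Qed.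

Lemma E_tgtL A f g B : E A f g -> tgt A g = Some B -> tgt A f = Some B.
Proof. intros H H1. apply eqv_tgt in H. destruct H as (_&B'&H2&H3). congruence. Qed.
Lemma E_tgtR A f g B : E A f g -> tgt A f = Some B -> tgt A g = Some B.
Proof. intros H H1. apply eqv_tgt in H. destruct H as (_&B'&H2&H3). congruence. Qed.

Lemma E_cmp A B f f' g g' : E B f f' -> E A g g' -> tgt A g = Some B -> E A (Cmp f g) (Cmp f' g').
Proof. intros. eapply ev_cmp; eauto. Qed.

Lemma E_cmpL A B f f' g : E B f f' -> S A -> tgt A g = Some B -> E A (Cmp f g) (Cmp f' g).
Proof. intros. eapply ev_cmp; eauto. eapply E_refl; eauto. Qed.

Lemma E_cmpR A B C f g g' : E A g g' -> tgt A g = Some B -> tgt B f = Some C -> E A (Cmp f g) (Cmp f g').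
Proof. intros H1 H2 H3. eapply ev_cmp; eauto. eapply E_refl; eauto. eapply tgt_inSeq; eauto. eapply E_S; eauto. Qed.

Lemma E_add A f f' g g' : E A f f' -> E A g g' -> tgt A f = tgt A g -> E A (Add f g) (Add f' g').
Proof. intros H1 H2 H3. apply ev_add; auto. Qed.

Lemma E_scal A c f f' : E A f f' -> E A (Scal c f) (Scal c f').
Proof. apply ev_scal. Qed.

Lemma E_lin A f g B : S A -> lin_ax f g -> tgt A f = Some B -> tgt A g = Some B -> E A f g.
Proof. intros. eapply ev_lin; eauto. Qed.

Lemma E_rel A f g B : S A -> rel om A f g -> tgt A f = Some B -> tgt A g = Some B -> E A f g.
Proof. intros. eapply ev_rel; eauto. Qed.

Fixpoint word (l : list tm) : tm :=
  match l with [] => Id | [x] => x | x :: l' => Cmp x (word l') end.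

Fixpoint flat (f : tm) : list tm :=
  match f with Cmp a b => flat a ++ flat b | Id => [] | x => [x] end.

Lemma word_cons x l : l <> [] -> word (x :: l) = Cmp x (word l).
Proof. destruct l; [congruence|reflexivity]. Qed.

Lemma tgt_word_app l1 l2 A : tgt A (word (l1 ++ l2)) =
  match tgt A (word l2) with Some B => tgt B (word l1) | None => None end.
Proof.
  induction l1 as [|x l1 IH].
  - simpl. destruct (tgt A (word l2)); reflexivity.
  - destruct l1 as [|y l1'].
    + simpl app. destruct l2 as [|z l2'].
      * simpl. reflexivity.
      * rewrite word_cons by congruence. simpl. reflexivity.
    + set (l1 := y :: l1') in *. assert (N1 : l1 <> []) by (unfold l1; congruence).
      assert (N2 : l1 ++ l2 <> []) by (destruct l1; [congruence|simpl; congruence]).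
      rewrite <- app_comm_cons. rewrite !word_cons by auto. cbn [tgt]. rewrite IH.
      destruct (tgt A (word l2)); reflexivity.
Qed.

Lemma E_assoc A f g h B C D : S A -> tgt A h = Some B -> tgt B g = Some C -> tgt C f = Some D ->
  E A (Cmp f (Cmp g h)) (Cmp (Cmp f g) h).
Proof. intros. eapply E_lin with (B:=D); auto. constructor. simpl. rewrite H0, H1. auto.
  simpl. rewrite H0. simpl. rewrite H1. auto. Qed.

Lemma E_idl A f B : S A -> tgt A f = Some B -> E A (Cmp Id f) f.
Proof. intros. eapply E_lin with (B:=B); auto. constructor. simpl. rewrite H0. auto. Qed.
Lemma E_idr A f B : S A -> tgt A f = Some B -> E A (Cmp f Id) f.
Proof. intros. eapply E_lin with (B:=B); auto. constructor. Qed.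

Lemma E_word_app l1 l2 A C : S A -> tgt A (word (l1 ++ l2)) = Some C ->
  E A (word (l1 ++ l2)) (Cmp (word l1) (word l2)).
Proof.
  revert A C. induction l1 as [|x l1 IH]; intros A C HA HT.
  - simpl in *. apply ev_sym. eapply E_idl; eauto.
  - destruct l1 as [|y l1'].
    + destruct l2 as [|z l2'].
      * simpl in *. apply ev_sym. eapply E_idr; eauto.
      * simpl app. rewrite word_cons by congruence. eapply E_refl; eauto.
    + set (l1 := y :: l1') in *. assert (N1 : l1 <> []) by (unfold l1; congruence).
      assert (N2 : l1 ++ l2 <> []) by (destruct l1; [congruence|simpl; congruence]).
      rewrite <- app_comm_cons. rewrite !word_cons by auto.
      rewrite <- app_comm_cons, word_cons in HT by auto.
      cbn [tgt] in HT. destruct (tgt A (word (l1 ++ l2))) as [B|] eqn:HB; [|discriminate].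
      pose proof HB as HB'. rewrite tgt_word_app in HB'. destruct (tgt A (word l2)) as [X|] eqn:HX; [|discriminate].
      eapply ev_trans. eapply E_cmpR; eauto.
      apply E_assoc with (B:=X) (C:=B) (D:=C); auto. Qed.

Lemma tgt_flat f A : tgt A (word (flat f)) = tgt A f.
Proof.
  revert A; induction f; intros A; try reflexivity.
  cbn [flat]. rewrite tgt_word_app, IHf2. cbn [tgt]. destruct (tgt A f2); auto.
Qed.

Lemma E_flat f A B : S A -> tgt A f = Some B -> E A f (word (flat f)).
Proof.
  revert A B; induction f; intros A B HA HT; try (eapply E_refl; eauto; fail).
  cbn [flat]. cbn [tgt] in HT. destruct (tgt A f2) as [X|] eqn:H2; [|discriminate].
    eapply ev_trans. eapply E_cmp; eauto. eapply IHf1; eauto. eapply tgt_inSeq; eauto.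
    apply ev_sym. eapply E_word_app; eauto. rewrite tgt_word_app, !tgt_flat, H2. rewrite tgt_flat. eauto.
Qed.

Lemma E_by_flat A T1 T2 B : S A -> tgt A T1 = Some B -> tgt A T2 = Some B ->
  E A (word (flat T1)) (word (flat T2)) -> E A T1 T2.
Proof. intros. eapply ev_trans. eapply E_flat; eauto. eapply ev_trans. eauto.
  apply ev_sym. eapply E_flat; eauto. Qed.

Lemma E_tgt_same A f g B : E A f g -> tgt A f = Some B -> tgt A g = Some B.
Proof. apply E_tgtR. Qed.

Lemma E_ctx l1 m m' l2 A X C : S A -> tgt A (word l2) = Some X -> E X (word m) (word m') ->
  tgt A (word (l1 ++ m ++ l2)) = Some C -> E A (word (l1 ++ m ++ l2)) (word (l1 ++ m' ++ l2)).
Proof.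
  intros HA H2 Hm HT.
  pose proof HT as HT'. rewrite tgt_word_app, tgt_word_app, H2 in HT'.
  destruct (tgt X (word m)) as [Y|] eqn:HY; [|discriminate].
  assert (HY' : tgt X (word m') = Some Y) by (eapply E_tgtR; eauto).
  assert (HX : S X) by (eapply tgt_inSeq; eauto).
  eapply ev_trans. eapply E_word_app; eauto.
  eapply ev_trans. 2: apply ev_sym; eapply E_word_app; eauto.
  2: rewrite tgt_word_app, tgt_word_app, H2, HY'; exact HT'.
  eapply E_cmpR with (B := Y).
  - eapply ev_trans. eapply E_word_app; eauto. rewrite tgt_word_app, H2. eauto.
    eapply ev_trans. 2: apply ev_sym; eapply E_word_app; eauto.
    2: rewrite tgt_word_app, H2; eauto.
    eapply E_cmpL; eauto.
  - rewrite tgt_word_app, H2. auto.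
  - exact HT'.
Qed.

Lemma E_wrw n m m' L A X C RHS : S A -> E X (word m) (word m') ->
  firstn (length m) (skipn n L) = m -> tgt A (word (skipn (n + length m) L)) = Some X ->
  tgt A (word L) = Some C ->
  E A (word (firstn n L ++ m' ++ skipn (n + length m) L)) RHS -> E A (word L) RHS.
Proof.
  intros HA Hm H1 H2 HT HR.
  assert (EL : L = firstn n L ++ m ++ skipn (n + length m) L).
  { rewrite <- (firstn_skipn n L) at 1. f_equal. rewrite <- H1 at 1.
    rewrite <- (firstn_skipn (length m) (skipn n L)) at 1. f_equal.
    rewrite skipn_skipn. f_equal. lia. }
  eapply ev_trans; [|exact HR]. rewrite EL at 1. eapply E_ctx; eauto. rewrite <- EL; eauto.
Qed.

Lemma E_wrw_sym n m m' L A X C LHS : S A -> E X (word m) (word m') ->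
  firstn (length m) (skipn n L) = m -> tgt A (word (skipn (n + length m) L)) = Some X ->
  tgt A (word L) = Some C ->
  E A LHS (word (firstn n L ++ m' ++ skipn (n + length m) L)) -> E A LHS (word L).
Proof. intros. apply ev_sym. eapply E_wrw; eauto. apply ev_sym; auto. Qed.

Lemma E_dist_add l1 p q l2 A C : S A -> tgt A (word (l1 ++ [Add p q] ++ l2)) = Some C ->
  E A (word (l1 ++ [Add p q] ++ l2)) (Add (word (l1 ++ [p] ++ l2)) (word (l1 ++ [q] ++ l2))).
Proof.
  intros HA HT. pose proof HT as HT'. rewrite !tgt_word_app in HT'.
  destruct (tgt A (word l2)) as [X|] eqn:H2; [|discriminate].
  cbn [word tgt] in HT'. destruct (tgt X p) as [Yp|] eqn:Hp; [|discriminate].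
  destruct (tgt X q) as [Yq|] eqn:Hq; [|discriminate].
  destruct (list_eq_dec Z.eq_dec Yp Yq); [subst Yq|discriminate].
  assert (HX : S X) by (eapply tgt_inSeq; eauto).
  assert (Tp : tgt A (word (l1 ++ [p] ++ l2)) = Some C) by (rewrite !tgt_word_app, H2; cbn [word]; rewrite Hp; auto).
  assert (Tq : tgt A (word (l1 ++ [q] ++ l2)) = Some C) by (rewrite !tgt_word_app, H2; cbn [word]; rewrite Hq; auto).
  eapply ev_trans. eapply E_word_app; eauto.
  eapply ev_trans. eapply E_cmpR. eapply E_word_app; eauto. rewrite tgt_word_app, H2; cbn [word tgt]; rewrite Hp, Hq.
  destruct (list_eq_dec Z.eq_dec Yp Yp); [|congruence]. eauto.
  rewrite tgt_word_app, H2; cbn [word tgt]; rewrite Hp, Hq. destruct (list_eq_dec Z.eq_dec Yp Yp); [|congruence]. eauto.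
  exact HT'.
  cbn [word].
  eapply ev_trans. eapply E_cmpR. eapply E_lin with (B := Yp); auto. apply la_distr.
  cbn [tgt]. rewrite H2, Hp, Hq. destruct (list_eq_dec Z.eq_dec Yp Yp); [|congruence]. auto.
  cbn [tgt]. rewrite H2, Hp, Hq. destruct (list_eq_dec Z.eq_dec Yp Yp); [|congruence]. auto.
  cbn [tgt]. rewrite H2, Hp, Hq. destruct (list_eq_dec Z.eq_dec Yp Yp); [|congruence]. auto.
  exact HT'.
  eapply ev_trans. eapply E_lin with (B := C); auto. apply la_distl.
  cbn [tgt]. rewrite H2, Hp, Hq. destruct (list_eq_dec Z.eq_dec Yp Yp); [|congruence]. auto.
  cbn [tgt]. rewrite H2, Hp, Hq, HT'. destruct (list_eq_dec Z.eq_dec C C); [|congruence]. auto.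
  apply E_add.
  - apply ev_sym. eapply ev_trans. eapply E_word_app; eauto. eapply E_cmpR.
    eapply E_word_app; eauto. rewrite tgt_word_app, H2; cbn [word]; rewrite Hp; auto.
    rewrite tgt_word_app, H2; cbn [word]; rewrite Hp; auto. eauto.
  - apply ev_sym. eapply ev_trans. eapply E_word_app; eauto. eapply E_cmpR.
    eapply E_word_app; eauto. rewrite tgt_word_app, H2; cbn [word]; rewrite Hq; auto.
    rewrite tgt_word_app, H2; cbn [word]; rewrite Hq; auto. eauto.
  - cbn [tgt]. rewrite H2, Hp, Hq, HT'. auto.
Qed.
End EQ.

Section EQ2.
Variables (r t : nat) (om : nat -> CC).
Notation E := (eqv r t om).
Notation S := (in_Seq r t).

Lemma E_dist_scal l1 c p l2 A C : S A -> tgt A (word (l1 ++ [Scal c p] ++ l2)) = Some C ->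
  E A (word (l1 ++ [Scal c p] ++ l2)) (Scal c (word (l1 ++ [p] ++ l2))).
Proof.
  intros HA HT. pose proof HT as HT'. rewrite !tgt_word_app in HT'.
  destruct (tgt A (word l2)) as [X|] eqn:H2; [|discriminate].
  cbn [word tgt] in HT'. destruct (tgt X p) as [Y|] eqn:Hp; [|discriminate].
  assert (HX : S X) by (eapply tgt_inSeq; eauto).
  assert (Tp : tgt A (word (l1 ++ [p] ++ l2)) = Some C) by (rewrite !tgt_word_app, H2; cbn [word]; rewrite Hp; auto).
  eapply ev_trans. eapply E_word_app; eauto.
  eapply ev_trans. eapply E_cmpR. eapply E_word_app; eauto. rewrite tgt_word_app, H2; cbn [word tgt]; rewrite Hp. eauto.
  rewrite tgt_word_app, H2; cbn [word tgt]; rewrite Hp. eauto. exact HT'.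
  cbn [word].
  eapply ev_trans. eapply E_cmpR. eapply E_lin with (B := Y); auto. apply la_scr.
  cbn [tgt]. rewrite H2, Hp. auto. cbn [tgt]. rewrite H2, Hp. auto.
  cbn [tgt]. rewrite H2, Hp. auto. exact HT'.
  eapply ev_trans. eapply E_lin with (B := C); auto. apply la_scl.
  cbn [tgt]. rewrite H2, Hp, HT'. auto. cbn [tgt]. rewrite H2, Hp, HT'. auto.
  apply E_scal. apply ev_sym. eapply ev_trans. eapply E_word_app; eauto. eapply E_cmpR.
    eapply E_word_app; eauto. rewrite tgt_word_app, H2; cbn [word]; rewrite Hp; auto.
    rewrite tgt_word_app, H2; cbn [word]; rewrite Hp; auto. eauto.
Qed.

Lemma split_at (L : list tm) n x : nth n L Id = x -> n < length L -> L = firstn n L ++ [x] ++ skipn (n+1) L.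
Proof.
  intros H1 H2. rewrite <- (firstn_skipn n L) at 1. f_equal.
  rewrite <- H1. clear H1. revert n H2. induction L; intros n H2; simpl in *. lia.
  destruct n; simpl. reflexivity. rewrite IHL at 1 by lia. reflexivity.
Qed.

Lemma E_wadd n L p q A C RHS : S A -> nth n L Id = Add p q -> n < length L -> tgt A (word L) = Some C ->
  E A (Add (word (firstn n L ++ [p] ++ skipn (n+1) L)) (word (firstn n L ++ [q] ++ skipn (n+1) L))) RHS ->
  E A (word L) RHS.
Proof.
  intros HA H1 H2 HT HR. eapply ev_trans; [|exact HR].
  rewrite (split_at L n _ H1 H2) at 1. apply E_dist_add with (C:=C); auto. rewrite <- (split_at L n _ H1 H2). auto.
Qed.

Lemma E_wscal n L c p A C RHS : S A -> nth n L Id = Scal c p -> n < length L -> tgt A (word L) = Some C ->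
  E A (Scal c (word (firstn n L ++ [p] ++ skipn (n+1) L))) RHS ->
  E A (word L) RHS.
Proof.
  intros HA H1 H2 HT HR. eapply ev_trans; [|exact HR].
  rewrite (split_at L n _ H1 H2) at 1. apply E_dist_scal with (C:=C); auto. rewrite <- (split_at L n _ H1 H2). auto.
Qed.
End EQ2.

Inductive rtm := RAt (x : tm) | RCmp (a b : rtm) | RId.
Fixpoint interp (R : rtm) : tm := match R with RAt x => x | RCmp a b => Cmp (interp a) (interp b) | RId => Id end.
Fixpoint rflat (R : rtm) : list tm := match R with RAt x => [x] | RCmp a b => rflat a ++ rflat b | RId => [] end.

Ltac reify T := lazymatch T with
  | Cmp ?a ?b => let ra := reify a in let rb := reify b in constr:(RCmp ra rb)
  | Id => constr:(RId)
  | _ => constr:(RAt T) end.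

Section EQ3.
Variables (r t : nat) (om : nat -> CC).
Notation E := (eqv r t om).
Notation S := (in_Seq r t).

Lemma tgt_rflat R A : tgt A (word (rflat R)) = tgt A (interp R).
Proof.
  revert A; induction R as [x | Ra IHa Rb IHb | ]; intros A; try reflexivity.
  cbn [rflat interp]. rewrite tgt_word_app, IHb. cbn [tgt]. destruct (tgt A (interp Rb)); auto.
Qed.

Lemma E_rflat R A B : S A -> tgt A (interp R) = Some B -> E A (interp R) (word (rflat R)).
Proof.
  revert A B; induction R as [x | Ra IHa Rb IHb | ]; intros A B HA HT; try (eapply E_refl; eauto; fail).
  cbn [rflat interp]. cbn [interp tgt] in HT. destruct (tgt A (interp Rb)) as [X|] eqn:H2; [|discriminate].
  eapply ev_trans. eapply E_cmp; eauto. eapply IHa; eauto. eapply tgt_inSeq; eauto.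
  apply ev_sym. eapply E_word_app; eauto. rewrite tgt_word_app, !tgt_rflat, H2. rewrite tgt_rflat. eauto.
Qed.

Lemma E_by_rflat A R1 R2 B : S A -> tgt A (interp R1) = Some B -> tgt A (interp R2) = Some B ->
  E A (word (rflat R1)) (word (rflat R2)) -> E A (interp R1) (interp R2).
Proof. intros. eapply ev_trans. eapply E_rflat; eauto. eapply ev_trans. eauto.
  apply ev_sym. eapply E_rflat; eauto. Qed.
End EQ3.

Inductive Rt (m : nat) : tm -> Prop :=
| Rt_id : Rt m Id
| Rt_y l : 1 <= l <= m -> Rt m (Yg l)
| Rt_cmp f g : Rt m f -> Rt m g -> Rt m (Cmp f g)
| Rt_add f g : Rt m f -> Rt m g -> Rt m (Add f g)
| Rt_scal c f : Rt m f -> Rt m (Scal c f).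

Lemma Rt_tgt m Q X : Rt m Q -> m <= length X -> tgt X Q = Some X.
Proof.
  induction 1; intros HX; cbn [tgt].
  - auto.
  - replace ((1 <=? l) && (l <=? length X)) with true; auto.
    symmetry. apply andb_true_iff. rewrite !Nat.leb_le. lia.
  - rewrite IHRt2, IHRt1; auto.
  - rewrite IHRt2, IHRt1; auto. destruct (list_eq_dec Z.eq_dec X X); congruence.
  - auto.
Qed.

Lemma Rt_mono m m' Q : Rt m Q -> m <= m' -> Rt m' Q.
Proof. induction 1; intros; constructor; auto; lia. Qed.

Lemma Rt_pw m l k : 1 <= l <= m -> Rt m (pw (Yg l) k).
Proof. intros. induction k; simpl; constructor; auto. constructor; auto. Qed.

Lemma tgt_pw f k X : tgt X f = Some X -> tgt X (pw f k) = Some X.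
Proof. intros H. induction k; simpl; auto. rewrite IHk. auto. Qed.

Lemma tgt_pwY l k X : 1 <= l <= length X -> tgt X (pw (Yg l) k) = Some X.
Proof. intros. apply tgt_pw. cbn [tgt]. replace ((1 <=? l) && (l <=? length X)) with true; auto.
    symmetry. apply andb_true_iff. rewrite !Nat.leb_le. lia. Qed.

Ltac ty_step :=
  first
  [ progress cbn [tgt word de pw Sub fst snd andb negb interp rflat firstn skipn app length Nat.add]
  | progress unfold validi
  | match goal with H : ent ?X ?l = _ |- context [ent ?X ?l] => rewrite H end
  | match goal with H : sw ?a ?X = _ |- context [sw ?a ?X] => rewrite H end
  | match goal with |- context [Nat.leb ?a ?b] =>
      first [replace (Nat.leb a b) with true by (symmetry; apply Nat.leb_le; lia)
            |replace (Nat.leb a b) with false by (symmetry; apply Nat.leb_gt; lia)] end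
  | match goal with |- context [Nat.ltb ?a ?b] =>
      first [replace (Nat.ltb a b) with true by (symmetry; apply Nat.ltb_lt; lia)
            |replace (Nat.ltb a b) with false by (symmetry; apply Nat.ltb_ge; lia)] end
  | match goal with |- context [Z.eqb ?a ?b] =>
      first [replace (Z.eqb a b) with true by (symmetry; apply Z.eqb_eq; lia)
            |replace (Z.eqb a b) with false by (symmetry; apply Z.eqb_neq; lia)] end
  | match goal with |- context [list_eq_dec Z.eq_dec ?a ?a] =>
      let NE := fresh in destruct (list_eq_dec Z.eq_dec a a) as [_|NE]; [|exfalso; apply NE; reflexivity] end
  | rewrite tgt_pwY by lia
  | match goal with |- context [tgt ?X (pw ?f ?k)] => rewrite (tgt_pw f k X) by (repeat ty_step; reflexivity) end
  | match goal with H : Rt ?m ?Q |- context [tgt ?X ?Q] => rewrite (Rt_tgt m Q X H) by lia end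
  | match goal with H : tgt ?X ?Q = _ |- context [tgt ?X ?Q] => rewrite H end
  ].
Ltac ty := repeat ty_step; try reflexivity.

Ltac rtsolve := first [assumption | apply Rt_pw; lia | (eapply Rt_mono; [eassumption|lia]) | (repeat constructor; lia)].
Ltac wstart := match goal with |- eqv ?r ?t ?om ?A ?T1 ?T2 =>
  let R1 := reify T1 in let R2 := reify T2 in change (eqv r t om A (interp R1) (interp R2));
  eapply E_by_rflat; [assumption | ty | ty | cbn [rflat app]] end.
Ltac wr n m m' H := eapply (@E_wrw _ _ _ n m m'); [assumption | first [exact H | eapply H; first [eassumption | rtsolve] | apply ev_sym; eapply H; first [eassumption | rtsolve]] | reflexivity | ty | ty | cbn [firstn skipn app length Nat.add]].
Ltac wl n m m' H := eapply (@E_wrw_sym _ _ _ n m m'); [assumption | first [exact H | eapply H; first [eassumption | rtsolve] | apply ev_sym; eapply H; first [eassumption | rtsolve]] | reflexivity | ty | ty | cbn [firstn skipn app length Nat.add]].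
Ltac wdone := eapply E_refl; [assumption | ty].
Ltac wadd n := eapply (@E_wadd _ _ _ n); [assumption | reflexivity | cbn [length]; lia | ty | cbn [firstn skipn app Nat.add] ].

Section T.
Variables (r t : nat) (om : nat -> CC).
Notation E := (eqv r t om).
Notation S := (in_Seq r t).

Goal forall A B j x, S A -> 1 <= j -> j + 1 < length A -> length B = length A ->
  ent A j = x -> ent A (j+1) = x -> ent A (j+1+1) = (-x)%Z -> (x = 1 \/ x = -1)%Z ->
  ent B j = x -> ent B (j+1) = (-x)%Z -> ent B (j+1+1) = x -> sw (j+1) A = B -> sw (j+1) B = A -> sw j A = A ->
  E A (Cmp (HEg (j+1)) (Cmp (Eg j) (Sg (j+1)))) (Cmp (Eg (j+1)) (Sg j)).
Proof.
  intros. eapply E_rel with (B := A). auto. apply (r6e om A j true false false). ty. ty.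
Qed.
End T.

Section LA.
Variables (r t : nat) (om : nat -> CC).
Notation E := (eqv r t om).
Notation S := (in_Seq r t).

Ltac lin c := eapply E_lin; [assumption | apply c | ty | ty].
Ltac tr := eapply ev_trans.

Variables (A B : list Z).
Hypothesis HA : S A.

Lemma CmCm : Cmul Cm1 Cm1 = C1.
Proof. unfold Cmul, Cm1, C1. simpl. f_equal; ring. Qed.

Lemma N5 P R : tgt A P = Some B -> tgt A R = Some B -> E A (Scal C0 P) (Scal C0 R).
Proof. intros HP HR.
  tr. apply ev_sym. lin (la_add0 (Scal C0 P) R).
  tr. lin la_addC. lin la_add0. Qed.

Lemma N6 P : tgt A P = Some B -> E A (Scal Cm1 (Scal Cm1 P)) P.
Proof. intros HP. tr. lin la_scA. rewrite CmCm. lin la_sc1. Qed.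

Lemma NEG P Q R : tgt A P = Some B -> tgt A Q = Some B -> tgt A R = Some B ->
  E A (Add P Q) (Scal C0 R) -> E A Q (Scal Cm1 P).
Proof. intros HP HQ HR H.
  tr. apply ev_sym. lin (la_add0 Q P).
  tr. apply E_add. apply E_refl with (B:=B); auto. apply ev_sym. lin la_addN. ty.
  tr. lin la_addA.
  tr. apply E_add. tr. lin la_addC. exact H. apply E_refl with (B:=B); auto. ty. ty.
  tr. lin la_addC. lin la_add0. Qed.

Lemma LA X Y W : tgt A X = Some B -> tgt A Y = Some B -> tgt A W = Some B ->
  E A (Add X (Scal Cm1 Y)) W -> E A X (Add Y W).
Proof. intros HX HY HW H. apply ev_sym.
  tr. apply E_add. apply E_refl with (B:=B); auto. apply ev_sym. exact H. ty.
  tr. lin la_addA. tr. apply E_add. lin la_addC. apply E_refl with (B:=B); auto. ty. ty.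
  tr. apply ev_sym. lin la_addA. tr. apply E_add. apply E_refl with (B:=B); auto. lin la_addN. ty.
  lin la_add0. Qed.

Lemma LA' X Y W : tgt A X = Some B -> tgt A Y = Some B -> tgt A W = Some B ->
  E A (Add X (Scal Cm1 Y)) (Scal Cm1 W) -> E A Y (Add X W).
Proof. intros HX HY HW H. apply LA with (Y:=Y) in H; auto. apply ev_sym.
  tr. apply E_add. exact H. apply E_refl with (B:=B); auto. ty.
  tr. apply ev_sym. lin la_addA. tr. apply E_add. apply E_refl with (B:=B); auto. lin la_addC. ty.
  tr. apply E_add. apply E_refl with (B:=B); auto. lin la_addN. ty.
  lin la_add0. Qed.
End LA.

Section COMM.
Variables (r t : nat) (om : nat -> CC).
Notation E := (eqv r t om).
Notation S := (in_Seq r t).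
Ltac lin c := eapply E_lin; [assumption | apply c | ty | ty].
Ltac tr := eapply ev_trans.

Lemma comm_Rt X X' G m Q : S X -> tgt X G = Some X' -> m <= length X -> m <= length X' ->
  (forall l, 1 <= l <= m -> E X (Cmp G (Yg l)) (Cmp (Yg l) G)) -> Rt m Q ->
  E X (Cmp G Q) (Cmp Q G).
Proof.
  intros HX HG L1 L2 Hb HQ. induction HQ.
  - tr. lin la_idr. apply ev_sym. lin la_idl.
  - auto.
  - assert (S X') by (eapply tgt_inSeq; eauto).
    tr. lin la_assoc. tr. eapply E_cmpL with (B:=X). eauto. auto. ty.
    tr. apply ev_sym. lin la_assoc. tr. eapply E_cmpR with (B:=X'). eauto. ty. ty.
    lin la_assoc.
  - tr. lin la_distl. tr. apply E_add; eauto. ty. apply ev_sym. lin la_distr.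
  - tr. lin la_scl. tr. apply E_scal. eauto. apply ev_sym. lin la_scr.
Qed.

Lemma comm_y X a b : S X -> 1 <= a <= length X -> 1 <= b <= length X ->
  E X (Cmp (Yg a) (Yg b)) (Cmp (Yg b) (Yg a)).
Proof. intros. eapply E_rel; [auto| apply r5d | ty | ty]. Qed.

Lemma comm_y_Rt X a m Q : S X -> 1 <= a <= length X -> m <= length X -> Rt m Q ->
  E X (Cmp (Yg a) Q) (Cmp Q (Yg a)).
Proof. intros. eapply comm_Rt; eauto. ty. intros. apply comm_y; auto; lia. Qed.

Lemma comm_Rt_Rt X m m' Q Q' : S X -> m <= length X -> m' <= length X -> Rt m Q -> Rt m' Q' ->
  E X (Cmp Q Q') (Cmp Q' Q).
Proof. intros HX L1 L2 HQ HQ'. eapply comm_Rt; eauto. apply Rt_tgt with (m:=m); auto.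
  intros. apply ev_sym. apply comm_y_Rt with (m:=m); auto. lia. Qed.
End COMM.

Lemma comm_pw_pw r t om X a c n n' : in_Seq r t X -> 1 <= a <= length X -> 1 <= c <= length X ->
  eqv r t om X (Cmp (pw (Yg a) n) (pw (Yg c) n')) (Cmp (pw (Yg c) n') (pw (Yg a) n)).
Proof. intros. apply comm_Rt_Rt with (m := length X) (m' := length X); auto; apply Rt_pw; lia. Qed.
Lemma comm_y_pw r t om X a c n : in_Seq r t X -> 1 <= a <= length X -> 1 <= c <= length X ->
  eqv r t om X (Cmp (Yg a) (pw (Yg c) n)) (Cmp (pw (Yg c) n) (Yg a)).
Proof. intros. apply comm_y_Rt with (m := length X); auto; apply Rt_pw; lia. Qed.

Definition good r t om (Cls : list Z -> Prop) m e T :=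
  exists Q, Rt m Q /\ forall A, Cls A -> eqv r t om A T (Cmp Q e).

Section GOOD.
Variables (r t : nat) (om : nat -> CC).
Notation E := (eqv r t om).
Notation S := (in_Seq r t).
Ltac lin c := eapply E_lin; [assumption | apply c | ty | ty].
Ltac tr := eapply ev_trans.
Variables (Cls : list Z -> Prop) (m : nat) (e : tm).
Hypothesis Hcls : forall A, Cls A -> S A /\ m <= length A /\ tgt A e = Some A.
Notation gd := (good r t om Cls m e).

Lemma good_E T T' : (forall A, Cls A -> E A T T') -> gd T' -> gd T.
Proof. intros H (Q&HQ&H'). exists Q. split; auto. intros A HA. tr; eauto. Qed.

Lemma good_add T1 T2 : gd T1 -> gd T2 -> gd (Add T1 T2).
Proof. intros (Q1&H1&E1) (Q2&H2&E2). exists (Add Q1 Q2). split. constructor; auto.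
  intros A HA. destruct (Hcls A HA) as (HS&HL&He). specialize (E1 A HA). specialize (E2 A HA).
  assert (tgt A T1 = Some A) by (eapply E_tgtL; eauto; ty).
  assert (tgt A T2 = Some A) by (eapply E_tgtL; eauto; ty).
  tr. apply E_add; eauto. congruence. apply ev_sym. lin la_distr. Qed.

Lemma good_lmul R T : Rt m R -> gd T -> gd (Cmp R T).
Proof. intros HR (Q&HQ&E1). exists (Cmp R Q). split. constructor; auto.
  intros A HA. destruct (Hcls A HA) as (HS&HL&He). specialize (E1 A HA).
  assert (tgt A T = Some A) by (eapply E_tgtL; eauto; ty).
  tr. eapply E_cmpR; eauto. ty. lin la_assoc. Qed.

Lemma good_scal c T : gd T -> gd (Scal c T).
Proof. intros (Q&HQ&E1). exists (Scal c Q). split. constructor; auto.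
  intros A HA. destruct (Hcls A HA) as (HS&HL&He). specialize (E1 A HA).
  tr. apply E_scal; eauto. apply ev_sym. lin la_scr. Qed.

Lemma good_e : gd e.
Proof. exists Id. split. constructor. intros A HA. destruct (Hcls A HA) as (HS&HL&He).
  apply ev_sym. lin la_idl. Qed.
End GOOD.

Section CASEI.
Variables (r t : nat) (om : nat -> CC).
Notation E := (eqv r t om).
Notation S := (in_Seq r t).
Ltac lin c := eapply E_lin; [assumption | apply c | ty | ty].
Ltac tr := eapply ev_trans.
Variables (j : nat) (P1 : list Z) (x : Z).
Hypothesis Hj : 1 <= j.
Hypothesis Hx : (x = 1 \/ x = -1)%Z.

Definition ClsI A := S A /\ firstn (j+1) A = P1 ++ [x; x] /\ 1 <= j+1 <= r+t-1 /\ ent A (j+1) <> ent A (j+1+1).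

Lemma factsI A : ClsI A ->
  j + 1 < length A /\ ent A j = x /\ ent A (j+1) = x /\ ent A (j+1+1) = (-x)%Z /\ sw j A = A /\
  S (sw (j+1) A) /\ length (sw (j+1) A) = length A /\ ent (sw (j+1) A) j = x /\
  ent (sw (j+1) A) (j+1) = (-x)%Z /\ ent (sw (j+1) A) (j+1+1) = x /\ sw (j+1) (sw (j+1) A) = A /\
  firstn j (sw (j+1) A) = P1 ++ [x].
Proof.
  intros (HS & HF & Hi & Hne).
  assert (HL : length A = r + t) by apply HS.
  assert (Hlt : j + 1 < length A) by lia.
  assert (LP : length P1 = j - 1).
  { apply firstn_len_eq in HF; [|lia]. rewrite length_app in HF. simpl in HF. lia. }
  assert (E1 : ent A j = x).
  { rewrite (ent_firstn A _ (j+1) j HF) by lia. replace (ent (P1 ++ [x;x]) j) with (ent (P1 ++ [x;x]) (length P1 + 1)) by (f_equal; lia). apply ent_L1. }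
  assert (E2 : ent A (j+1) = x).
  { rewrite (ent_firstn A _ (j+1) (j+1) HF) by lia. replace (ent (P1 ++ [x;x]) (j+1)) with (ent (P1 ++ [x;x]) (length P1 + 1 + 1)) by (f_equal; lia). apply ent_L2. }
  assert (E3 : ent A (j+1+1) = (-x)%Z).
  { rewrite E2 in Hne. destruct (ent_pm r t A (j+1+1) HS) as [H|H]; [lia|lia|]; lia. }
  assert (V : 1 <= j + 1 < length A) by lia.
  assert (V' : 1 <= j < length A) by lia.
  assert (HSB : S (sw (j+1) A)) by (apply in_Seq_sw; auto).
  repeat match goal with |- _ /\ _ => split end; auto.
  - apply sw_same; auto. congruence.

  - apply sw_len; auto.
  - rewrite ent_sw_o; auto; lia.
  - rewrite ent_sw_i; auto.
  - rewrite ent_sw_i1; auto.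
  - apply sw_sw; auto.
  - replace j with (j+1-1) at 1 by lia. rewrite firstn_sw_lt by auto. replace (j+1-1) with j by lia.
    replace (firstn j A) with (firstn j (firstn (j+1) A)) by (rewrite firstn_firstn; f_equal; lia). rewrite HF.
    rewrite firstn_app, LP. replace (j - (j-1)) with 1 by lia. rewrite firstn_all2 by lia. reflexivity.
Qed.

Section LOC.
Variables (A B : list Z).
Hypotheses (HA : S A) (HB : S B) (Hlt : j + 1 < length A) (LB : length B = length A)
  (EA1 : ent A j = x) (EA2 : ent A (j+1) = x) (EA3 : ent A (j+1+1) = (-x)%Z)
  (SWj : sw j A = A) (SWA : sw (j+1) A = B) (SWB : sw (j+1) B = A)
  (EB1 : ent B j = x) (EB2 : ent B (j+1) = (-x)%Z) (EB3 : ent B (j+1+1) = x).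

Lemma s1 : E A (Cmp (Yg (j+1)) (Sg j)) (Add (Cmp (Sg j) (Yg j)) Id).
Proof. apply LA' with (B := A); auto; try ty.
  eapply E_rel. auto. apply (r7a om A j). congruence. ty. ty. Qed.

Lemma s2 : E A (Cmp (Eg (j+1)) (Sg j)) (Cmp (HEg (j+1)) (Cmp (Eg j) (Sg (j+1)))).
Proof. apply ev_sym. eapply E_rel. auto. apply (r6e om A j true false false). ty. ty. Qed.
Lemma s3 : E A (Cmp (Sg j) (Eg (j+1))) (Cmp (Sg (j+1)) (Cmp (Eg j) (HEg (j+1)))).
Proof. apply ev_sym. eapply E_rel. auto. apply (r6f om A j false true false). ty. ty. Qed.
Lemma s4 : E A (Cmp (HEg (j+1)) (Cmp (Eg j) (HEg (j+1)))) (Eg (j+1)).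
Proof. eapply E_rel. auto. apply (r6g om A j true false true false). ty. ty. Qed.
Lemma s5 : E A (Cmp (Sg (j+1)) (Eg (j+1))) (HEg (j+1)).
Proof. eapply E_rel. auto. apply (r6a om A (j+1) false true). ty. ty. Qed.
Lemma s6 : E B (Cmp (Sg (j+1)) (Sg (j+1))) Id.
Proof. eapply E_rel. auto. apply (r1 om B (j+1)). ty. ty. Qed.

Lemma c_h Q : Rt j Q -> E A (Cmp (Sg (j+1)) Q) (Cmp Q (Sg (j+1))).
Proof. intros. eapply comm_Rt with (m := j); eauto; try ty; try lia. intros. eapply E_rel. auto. apply r2c; lia. ty. ty. Qed.
Lemma c_eh Q : Rt j Q -> E B (Cmp (HEg (j+1)) Q) (Cmp Q (HEg (j+1))).
Proof. intros. eapply comm_Rt with (m := j); eauto; try ty; try lia. intros. eapply E_rel. auto. apply (r5c om B (j+1) l true true); lia. ty. ty. Qed.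
Lemma c_e Q : Rt j Q -> E A (Cmp (Eg (j+1)) Q) (Cmp Q (Eg (j+1))).
Proof. intros. eapply comm_Rt with (m := j); eauto; try ty; try lia. intros. eapply E_rel. auto. apply (r5c om A (j+1) l false false); lia. ty. ty. Qed.
Lemma s7 : E A (Cmp (Sg j) (Sg j)) Id.
Proof. eapply E_rel. auto. apply (r1 om A j). ty. ty. Qed.
Lemma c_y l Q : 1 <= l <= length A -> Rt j Q -> E A (Cmp (Yg l) Q) (Cmp Q (Yg l)).
Proof. intros. eapply comm_y_Rt with (m := j); eauto. lia. Qed.
End LOC.

Lemma HclsI A : ClsI A -> S A /\ j <= length A /\ tgt A (Eg (j+1)) = Some A.
Proof. intros H. pose proof (factsI A H) as (Hlt&EA1&EA2&EA3&_). destruct H as (HA&_).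
  split; auto. split. lia. ty. Qed.

Notation gd := (good r t om ClsI j (Eg (j+1))).

Ltac getfacts A H :=
  let Hlt := fresh "Hlt" in let EA1 := fresh "EA1" in let EA2 := fresh "EA2" in let EA3 := fresh "EA3" in
  let SWj := fresh "SWj" in let HSB := fresh "HB" in let LB := fresh "LB" in let EB1 := fresh "EB1" in
  let EB2 := fresh "EB2" in let EB3 := fresh "EB3" in let SWB := fresh "SWB" in let FB := fresh "FB" in
  let B := fresh "B" in let SWA := fresh "SWA" in let HA := fresh "HA" in
  destruct (factsI A H) as (Hlt&EA1&EA2&EA3&SWj&HSB&LB&EB1&EB2&EB3&SWB&FB);
  set (B := sw (j+1) A) in *; assert (SWA : sw (j+1) A = B) by reflexivity; clearbody B;
  destruct H as (HA&_&?&_).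

Definition Ut a b := Cmp (Eg (j+1)) (Cmp (pw (Yg (j+1)) a) (Cmp (Sg j) (Cmp (pw (Yg j) b) (Cmp (Sg j) (Eg (j+1)))))).
Definition Xt a := Cmp (Eg (j+1)) (Cmp (pw (Yg (j+1)) a) (Cmp (Sg j) (Eg (j+1)))).
Definition Zt a := Cmp (Eg (j+1)) (Cmp (pw (Yg (j+1)) a) (Eg (j+1))).

Hypothesis IH : forall b, exists Q, Rt (j-1) Q /\ forall B, S B -> firstn j B = P1 ++ [x] -> 1 <= j <= r+t-1 ->
  ent B j <> ent B (j+1) -> E B (Cmp (Eg j) (Cmp (pw (Yg j) b) (Eg j))) (Cmp Q (Eg j)).

Lemma U0 b : gd (Ut 0 b).
Proof.
  destruct (IH b) as (Q & HQ & HQE). exists Q. split. eapply Rt_mono; eauto; lia.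
  intros A HC. getfacts A HC. assert (HQ' : Rt j Q) by (eapply Rt_mono; eauto; lia).
  unfold Ut; cbn [pw]. wstart.
  wr 0 [Eg (j+1); Sg j] [HEg (j+1); Eg j; Sg (j+1)] (s2 A B).
  wr 4 [Sg j; Eg (j+1)] [Sg (j+1); Eg j; HEg (j+1)] (s3 A B).
  wr 2 [Sg (j+1); pw (Yg j) b] [pw (Yg j) b; Sg (j+1)] (c_h A B).
  wr 3 [Sg (j+1); Sg (j+1)] (@nil tm) (s6 A B).
  assert (HI : E B (Cmp (Eg j) (Cmp (pw (Yg j) b) (Eg j))) (Cmp Q (Eg j))).
  { apply HQE; auto. lia. rewrite EB1, EB2. lia. }
  wr 1 [Eg j; pw (Yg j) b; Eg j] [Q; Eg j] HI.
  wr 0 [HEg (j+1); Q] [Q; HEg (j+1)] (c_eh A B).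
  wr 1 [HEg (j+1); Eg j; HEg (j+1)] [Eg (j+1)] (s4 A B).
  wdone.
Qed.

Lemma good_rmul T R : Rt j R -> gd T -> gd (Cmp T R).
Proof. intros HR (Q&HQ&HE). exists (Cmp Q R). split. constructor; auto.
  intros A HC. specialize (HE A HC). getfacts A HC.
  assert (tgt A T = Some A) by (eapply E_tgtL; eauto; ty).
  tr. eapply E_cmpL; eauto. ty.
  wstart. wr 1 [Eg (j+1); R] [R; Eg (j+1)] (c_e A B). wdone. Qed.

Lemma X0 : gd (Xt 0).
Proof. apply good_E with (T' := Eg (j+1)). 2: apply good_e; exact HclsI.
  intros A HC. getfacts A HC. unfold Xt. cbn [pw]. wstart.
  wr 0 [Eg (j+1); Sg j] [HEg (j+1); Eg j; Sg (j+1)] (s2 A B).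
  wr 2 [Sg (j+1); Eg (j+1)] [HEg (j+1)] (s5 A B).
  wr 0 [HEg (j+1); Eg j; HEg (j+1)] [Eg (j+1)] (s4 A B).
  wdone. Qed.

Lemma Xsucc a : gd (Xt a) -> gd (Zt a) -> gd (Xt (Datatypes.S a)).
Proof. intros H1 H2. apply good_E with (T' := Add (Cmp (Xt a) (Yg j)) (Zt a)).
  2: apply good_add; [exact HclsI| apply good_rmul; [rtsolve|exact H1] | exact H2].
  intros A HC. getfacts A HC. unfold Xt, Zt. cbn [pw]. wstart.
  wr 1 [Yg (j+1); pw (Yg (j+1)) a] [pw (Yg (j+1)) a; Yg (j+1)] (comm_y_pw r t om A).
  wr 2 [Yg (j+1); Sg j] [Add (Cmp (Sg j) (Yg j)) Id] (s1 A B).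
  wadd 2. cbn [word]. apply E_add; [| |ty].
  - wstart. wl 3 [Eg (j+1); Yg j] [Yg j; Eg (j+1)] (c_e A B). wdone.
  - wstart. wdone.
Qed.

Lemma Usucc a b : gd (Ut a (Datatypes.S b)) -> gd (Xt a) -> gd (Ut (Datatypes.S a) b).
Proof. intros H1 H2. apply good_E with (T' := Add (Ut a (Datatypes.S b)) (Cmp (pw (Yg j) b) (Xt a))).
  2: apply good_add; [exact HclsI| exact H1 | apply good_lmul; [exact HclsI|rtsolve|exact H2]].
  intros A HC. getfacts A HC. unfold Xt, Ut. cbn [pw]. wstart.
  wr 1 [Yg (j+1); pw (Yg (j+1)) a] [pw (Yg (j+1)) a; Yg (j+1)] (comm_y_pw r t om A).
  wr 2 [Yg (j+1); Sg j] [Add (Cmp (Sg j) (Yg j)) Id] (s1 A B).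
  wadd 2. cbn [word]. apply E_add; [| |ty].
  - wstart. wdone.
  - wstart. wl 0 [pw (Yg j) b; Eg (j+1)] [Eg (j+1); pw (Yg j) b] (c_e A B).
    wl 1 [pw (Yg j) b; pw (Yg (j+1)) a] [pw (Yg (j+1)) a; pw (Yg j) b] (comm_pw_pw r t om A).
    wdone.
Qed.

Lemma ZU k : gd (Ut k 0) -> gd (Zt k).
Proof. intros H. apply good_E with (T' := Ut k 0). 2: exact H.
  intros A HC. getfacts A HC. unfold Zt, Ut. cbn [pw]. wstart.
  wl 2 [Sg j; Sg j] (@nil tm) (s7 A B). wdone. Qed.

Lemma goodX a : (forall c, c < a -> gd (Zt c)) -> gd (Xt a).
Proof. induction a; intros H. apply X0. apply Xsucc. apply IHa. intros; apply H; lia. apply H; lia. Qed.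

Lemma goodU k : (forall c, c < k -> gd (Zt c)) -> forall a b, a <= k -> gd (Ut a b).
Proof. intros H a. induction a; intros b Ha. apply U0. apply Usucc. apply IHa; lia.
  apply goodX. intros; apply H; lia. Qed.

Lemma goodZ k : gd (Zt k).
Proof. induction k as [k IHk] using lt_wf_ind. apply ZU. apply goodU with (k := k); auto. Qed.
End CASEI.

Section FLIP.
Variables (r t : nat) (om : nat -> CC).
Notation E := (eqv r t om).
Notation SQ := (in_Seq r t).
Ltac lin c := eapply E_lin; [assumption | apply c | ty | ty].
Ltac tr := eapply ev_trans.
Variables (i : nat) (P0 : list Z) (x : Z).
Hypothesis Hi : 1 <= i.
Hypothesis Hx : (x = 1 \/ x = -1)%Z.

Definition ClsF y A := SQ A /\ firstn i A = P0 ++ [y] /\ 1 <= i <= r+t-1 /\ ent A i <> ent A (i+1).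

Lemma factsF y A : (y = 1 \/ y = -1)%Z -> ClsF y A ->
  i < length A /\ ent A i = y /\ ent A (i+1) = (-y)%Z /\
  SQ (sw i A) /\ length (sw i A) = length A /\ ent (sw i A) i = (-y)%Z /\
  ent (sw i A) (i+1) = y /\ sw i (sw i A) = A /\ firstn i (sw i A) = P0 ++ [-y]%Z.
Proof.
  intros Hy (HS & HF & Hi' & Hne).
  assert (HL : length A = r + t) by apply HS.
  assert (Hlt : i < length A) by lia.
  assert (LP : length P0 = i - 1).
  { apply firstn_len_eq in HF; [|lia]. rewrite length_app in HF. simpl in HF. lia. }
  assert (E1 : ent A i = y).
  { rewrite (ent_firstn A _ i i HF) by lia. rewrite ent_app2 by lia. replace (i - length P0) with 1 by lia. reflexivity. }
  assert (E2 : ent A (i+1) = (-y)%Z).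
  { rewrite E1 in Hne. destruct (ent_pm r t A (i+1) HS) as [H|H]; lia. }
  assert (V : 1 <= i < length A) by lia.
  assert (HSB : SQ (sw i A)) by (apply in_Seq_sw; auto).
  repeat match goal with |- _ /\ _ => split end; auto.
  - apply sw_len; auto.
  - rewrite ent_sw_i; auto.
  - rewrite ent_sw_i1; auto.
  - apply sw_sw; auto.
  - rewrite firstn_sw_i by auto. rewrite E2. f_equal.
    replace (firstn (i-1) A) with (firstn (i-1) (firstn i A)) by (rewrite firstn_firstn; f_equal; lia).
    rewrite HF, firstn_app, LP, Nat.sub_diag. simpl. rewrite app_nil_r. apply firstn_all2. lia.
Qed.

Definition Yf := Add (Yg (i+1)) (Eg i).
Definition Vt n k := Cmp (Eg i) (Cmp (pw (Yg i) n) (Cmp (pw Yf k) (Eg i))).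
Definition Zf k := Cmp (Eg i) (Cmp (pw (Yg i) k) (Eg i)).

Lemma HclsF y A : (y = 1 \/ y = -1)%Z -> ClsF y A -> SQ A /\ i - 1 <= length A /\ tgt A (Eg i) = Some A.
Proof. intros Hy H. pose proof (factsF y A Hy H) as (Hlt&E1&E2&_). destruct H as (HA&_).
  split; auto. split. lia. ty. Qed.

Notation gd2 := (good r t om (ClsF (-x)%Z) (i-1) (Eg i)).
Notation gd := (good r t om (ClsF x) (i-1) (Eg i)).

Hypothesis IH : forall m, gd2 (Zf m).

Lemma Hx' : ((-x) = 1 \/ (-x) = -1)%Z.
Proof. lia. Qed.

Section LOC2.
Variables (A2 : list Z).
Hypotheses (HA2 : SQ A2) (Hlt : i < length A2) (EA1 : ent A2 i = (-x)%Z) (EA2 : ent A2 (i+1) = x).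

Lemma negl : E A2 (Cmp (Eg i) (Yg (i+1))) (Scal Cm1 (Cmp (Eg i) (Yg i))).
Proof. apply NEG with (B := A2) (R := Eg i); auto; try ty.
  tr. apply ev_sym. lin la_distl. eapply E_rel. auto. apply (r8a om A2 i false false). ty. ty. Qed.
End LOC2.

Lemma Vgood k : forall n, gd2 (Vt n k).
Proof.
  induction k; intros n.
  - apply good_E with (T' := Zf n). 2: apply IH.
    intros A HC. destruct (factsF _ A Hx' HC) as (Hlt&E1&E2&_). destruct HC as (HA&_).
    unfold Vt, Zf, Yf. cbn [pw]. wstart. wdone.
  - destruct (IH n) as (Q1 & HQ1 & HE1).
    apply good_E with (T' := Add (Scal Cm1 (Vt (Datatypes.S n) k)) (Cmp Q1 (Vt 0 k))).
    2: apply good_add; [intros A0 HC0; apply (HclsF (-x)); auto using Hx' | apply good_scal; [intros A0 HC0; apply (HclsF (-x)); auto using Hx'|apply IHk]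
                       | apply good_lmul; [intros A0 HC0; apply (HclsF (-x)); auto using Hx'|auto|apply IHk]].
    intros A HC. specialize (HE1 A HC). destruct (factsF _ A Hx' HC) as (Hlt&E1&E2&_). destruct HC as (HA&_).
    assert (HQ1' : Rt (length A) Q1) by (eapply Rt_mono; eauto; lia).
    unfold Vt, Zf, Yf in *. cbn [pw] in *. wstart.
    wadd 2. cbn [word]. apply E_add; [| |ty].
    + wstart. wr 1 [pw (Yg i) n; Yg (i+1)] [Yg (i+1); pw (Yg i) n] (comm_y_pw r t om A).
      wr 0 [Eg i; Yg (i+1)] [Scal Cm1 (Cmp (Eg i) (Yg i))] (negl A).
      eapply (@E_wscal _ _ _ 0); [assumption | reflexivity | cbn [length]; lia | ty | cbn [firstn skipn app Nat.add] ].
      cbn [word]. apply E_scal. wstart. wdone.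
    + assert (H1 : E A (Cmp (Eg i) (Cmp (pw (Yg i) n) (Eg i))) (Cmp Q1 (Eg i))) by exact HE1.
      wstart. wr 0 [Eg i; pw (Yg i) n; Eg i] [Q1; Eg i] H1. wdone.
Qed.

Section LOC3.
Variables (A A2 : list Z).
Hypotheses (HA : SQ A) (HA2 : SQ A2) (Hlt : i < length A) (LA2 : length A2 = length A)
  (EA1 : ent A i = x) (EA2 : ent A (i+1) = (-x)%Z) (EB1 : ent A2 i = (-x)%Z) (EB2 : ent A2 (i+1) = x)
  (SWA : sw i A = A2) (SWB : sw i A2 = A).

Lemma f1 : E A (Eg i) (Cmp (Sg i) (Cmp (Eg i) (Sg i))).
Proof. tr. eapply E_rel. auto. apply (r6b om A i false true). ty. ty.
  tr. eapply E_cmpL with (B := A2). apply ev_sym. eapply E_rel. auto. apply (r6a om A2 i false true). ty. ty. auto. ty.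
  apply ev_sym. lin la_assoc. Qed.

Lemma f3 : E A2 (Cmp (Sg i) (Cmp (Yg i) (Sg i))) (Add (Yg (i+1)) (Eg i)).
Proof.
  assert (H7 : E A (Cmp (Sg i) (Yg i)) (Add (Cmp (Yg (i+1)) (Sg i)) (HEg i))).
  { apply LA with (B := A2); auto; try ty. eapply E_rel. auto. apply (r7c om A i). lia. ty. ty. }
  assert (H1 : E A2 (Cmp (Sg i) (Sg i)) Id) by (eapply E_rel; [auto|apply (r1 om A2 i)|ty|ty]).
  assert (H6 : E A2 (Eg i) (Cmp (HEg i) (Sg i))) by (eapply E_rel; [auto|apply (r6b om A2 i false true)|ty|ty]).
  wstart. wr 0 [Sg i; Yg i] [Add (Cmp (Yg (i+1)) (Sg i)) (HEg i)] H7.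
  wadd 0. cbn [word]. apply E_add; [| |ty].
  - wstart. wr 1 [Sg i; Sg i] (@nil tm) H1. wdone.
  - wstart. wl 0 [Eg i] [HEg i; Sg i] H6. wdone.
Qed.

Lemma f2 k : E A2 (Cmp (Sg i) (Cmp (pw (Yg i) k) (Sg i))) (pw Yf k).
Proof.
  assert (H1 : E A2 (Cmp (Sg i) (Sg i)) Id) by (eapply E_rel; [auto|apply (r1 om A2 i)|ty|ty]).
  assert (H1' : E A (Cmp (Sg i) (Sg i)) Id) by (eapply E_rel; [auto|apply (r1 om A i)|ty|ty]).
  induction k.
  - cbn [pw]. wstart. wr 0 [Sg i; Sg i] (@nil tm) H1. wdone.
  - cbn [pw]. unfold Yf in *. wstart.
    wr 2 (@nil tm) [Sg i; Sg i] H1'.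
    wr 3 [Sg i; pw (Yg i) k; Sg i] [pw (Add (Yg (i + 1)) (Eg i)) k] IHk.
    wr 0 [Sg i; Yg i; Sg i] [Add (Yg (i + 1)) (Eg i)] f3.
    wdone.
Qed.
End LOC3.

Lemma flip k : gd (Zf k).
Proof.
  destruct (Vgood k 0) as (Q & HQ & HE). exists Q. split; auto.
  intros A HC. destruct (factsF x A Hx HC) as (Hlt&EA1&EA2&HSB&LB&EB1&EB2&SWB&FB).
  set (A2 := sw i A) in *. assert (SWA : sw i A = A2) by reflexivity. clearbody A2.
  assert (HC2 : ClsF (-x) A2). { destruct HC as (HA&_&Hi'&_). split; auto. split; auto. split; auto. lia. }
  specialize (HE A2 HC2). destruct HC as (HA&_).
  assert (HQ' : E A2 (Cmp (Eg i) (Cmp (pw Yf k) (Eg i))) (Cmp Q (Eg i))).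
  { tr; [|exact HE]. unfold Vt, Yf. cbn [pw]. wstart. wdone. }
  assert (Hc : E A2 (Cmp (Sg i) Q) (Cmp Q (Sg i))).
  { eapply comm_Rt with (m := i - 1); eauto; try ty; try lia. intros. eapply E_rel. auto. apply r2c; lia. ty. ty. }
  unfold Zf. wstart.
  wr 0 [Eg i] [Sg i; Eg i; Sg i] (f1 A A2).
  wr 4 [Eg i] [Sg i; Eg i; Sg i] (f1 A A2).
  wr 2 [Sg i; pw (Yg i) k; Sg i] [pw Yf k] (f2 A A2).
  unfold Yf in *.
  wr 1 [Eg i; pw (Add (Yg (i + 1)) (Eg i)) k; Eg i] [Q; Eg i] HQ'.
  wr 0 [Sg i; Q] [Q; Sg i] Hc.
  wl 1 [Eg i] [Sg i; Eg i; Sg i] (f1 A A2).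
  wdone.
Qed.
End FLIP.

Section MAIN.
Variables (r t : nat) (om : nat -> CC).
Notation E := (eqv r t om).
Notation SQ := (in_Seq r t).
Ltac lin c := eapply E_lin; [assumption | apply c | ty | ty].
Ltac tr := eapply ev_trans.

Definition Stmt i P := forall k, exists Q, Rt (i-1) Q /\ forall A, SQ A -> firstn i A = P -> 1 <= i <= r+t-1 ->
  ent A i <> ent A (i+1) -> E A (Cmp (Eg i) (Cmp (pw (Yg i) k) (Eg i))) (Cmp Q (Eg i)).

Lemma vacuous i P : (forall A, SQ A -> firstn i A = P -> 1 <= i <= r+t-1 -> ent A i <> ent A (i+1) -> False) -> Stmt i P.
Proof. intros H k. exists Id. split. constructor. intros. exfalso. eauto. Qed.

Lemma base1 : Stmt 1 [1%Z].
Proof. intros k. exists (Scal (om k) Id). split. repeat constructor.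
  intros A HA HF Hi Hne.
  assert (HL : length A = r + t) by apply HA.
  assert (E1 : ent A 1 = 1%Z). { rewrite (ent_firstn A _ 1 1 HF) by lia. reflexivity. }
  assert (E2 : ent A 2 = (-1)%Z). { replace (1+1) with 2 in Hne by lia. rewrite E1 in Hne.
    destruct (ent_pm r t A 2 HA) as [H|H]; lia. }
  assert (E2' : ent A (1+1) = (-1)%Z) by exact E2.
  tr. eapply E_rel. auto. apply (r4 om A k E1 E2). ty. ty.
  apply ev_sym. tr. lin la_scr. apply E_scal. lin la_idl.
Qed.

Lemma from_caseI j P1 x : 1 <= j -> (x = 1 \/ x = -1)%Z -> Stmt j (P1 ++ [x]) -> Stmt (j+1) (P1 ++ [x; x]).
Proof. intros Hj Hx IH k. destruct (goodZ r t om j P1 x Hj Hx IH k) as (Q&HQ&HE).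
  exists Q. split. replace (j+1-1) with j by lia. auto.
  intros A HA HF Hi Hne. apply HE. split; auto. Qed.

Lemma from_flip i P0 x : 1 <= i -> (x = 1 \/ x = -1)%Z -> Stmt i (P0 ++ [(-x)%Z]) -> Stmt i (P0 ++ [x]).
Proof. intros Hi Hx IH k.
  assert (IH' : forall m, good r t om (ClsF r t i P0 (-x)) (i-1) (Eg i) (Zf i m)).
  { intros m. destruct (IH m) as (Q&HQ&HE). exists Q. split; auto. intros A (HA&HF&Hi'&Hne). apply HE; auto. }
  destruct (flip r t om i P0 x Hi Hx IH' k) as (Q&HQ&HE).
  exists Q. split; auto. intros A HA HF Hi' Hne. apply HE. split; auto. Qed.

Lemma ent_in_P i P A l : firstn i A = P -> 1 <= l <= i -> i <= length A -> ent A l = ent P l.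
Proof. intros. apply ent_firstn with (n := i); auto. Qed.

Lemma main : forall i P, Stmt i P.
Proof.
  intros i. induction i as [i IHi] using lt_wf_ind. intros P.
  destruct i as [|i].
  { apply vacuous. intros. lia. }
  destruct (Nat.eq_dec (length P) (S i)) as [HlP|HlP].
  2: { apply vacuous. intros A HA HF Hi Hne. apply HlP. apply firstn_len_eq in HF; auto.
       destruct HA as (HL&_). lia. }
  destruct (exists_last (l := P)) as (P' & y & EP). { intros ->. simpl in HlP. lia. }
  subst P. rewrite length_app in HlP. simpl in HlP.
  destruct (Z.eq_dec y 1) as [Hy|Hy]; [|destruct (Z.eq_dec y (-1)) as [Hy'|Hy']].
  3: { apply vacuous. intros A HA HF Hi Hne. assert (HL : length A = r + t) by apply HA.
       assert (ent A (S i) = y). { rewrite (ent_in_P (S i) _ A (S i) HF) by lia.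
         rewrite ent_app2 by lia. replace (S i - length P') with 1 by lia. reflexivity. }
       destruct (ent_pm r t A (S i) ltac:(auto)) as [H1|H1]; lia. }
  all: assert (Hy2 : (y = 1 \/ y = -1)%Z) by lia.
  all: destruct i as [|j].
  - destruct P'; [|simpl in HlP; lia]. subst. apply base1.
  - destruct (exists_last (l := P')) as (P1 & z & EP). { intros ->. simpl in HlP. lia. }
    subst P'. rewrite length_app in HlP. simpl in HlP. rewrite <- app_assoc. simpl.
    replace (S (S j)) with (S j + 1) by lia.
    destruct (Z.eq_dec z y) as [->|Hz].
    + apply from_caseI; [lia|exact Hy2|apply IHi; lia].
    + destruct (Z.eq_dec z (-y)) as [->|Hz'].
      * change (P1 ++ [(-y)%Z; y]) with (P1 ++ [(-y)%Z] ++ [y]). rewrite app_assoc.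
        apply from_flip; [lia|exact Hy2|]. rewrite <- app_assoc. change ([(-y)%Z] ++ [(- y)%Z]) with [(-y)%Z; (-y)%Z].
        apply from_caseI; [lia|lia|apply IHi; lia].
      * apply vacuous. intros A HA HF Hi Hne. assert (HL : length A = r + t) by apply HA.
        assert (ent A (S j) = z). { rewrite (ent_in_P (S j + 1) _ A (S j) HF) by lia.
          rewrite ent_app2 by lia. replace (S j - length P1) with 1 by lia. reflexivity. }
        assert (ent A (S j + 1) = y). { rewrite (ent_in_P (S j + 1) _ A (S j + 1) HF) by lia.
          rewrite ent_app2 by lia. replace (S j + 1 - length P1) with 2 by lia. reflexivity. }
        destruct (ent_pm r t A (S j) ltac:(auto) ltac:(lia)) as [H1|H1]; lia.
  - destruct P'; [|simpl in HlP; lia]. subst. apply (from_flip 1 [] (-1)). lia. lia. apply base1.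
  - destruct (exists_last (l := P')) as (P1 & z & EP). { intros ->. simpl in HlP. lia. }
    subst P'. rewrite length_app in HlP. simpl in HlP. rewrite <- app_assoc. simpl.
    replace (S (S j)) with (S j + 1) by lia.
    destruct (Z.eq_dec z y) as [->|Hz].
    + apply from_caseI; [lia|exact Hy2|apply IHi; lia].
    + destruct (Z.eq_dec z (-y)) as [->|Hz'].
      * change (P1 ++ [(-y)%Z; y]) with (P1 ++ [(-y)%Z] ++ [y]). rewrite app_assoc.
        apply from_flip; [lia|exact Hy2|]. rewrite <- app_assoc. change ([(-y)%Z] ++ [(- y)%Z]) with [(-y)%Z; (-y)%Z].
        apply from_caseI; [lia|lia|apply IHi; lia].
      * apply vacuous. intros A HA HF Hi Hne. assert (HL : length A = r + t) by apply HA.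
        assert (ent A (S j) = z). { rewrite (ent_in_P (S j + 1) _ A (S j) HF) by lia.
          rewrite ent_app2 by lia. replace (S j - length P1) with 1 by lia. reflexivity. }
        destruct (ent_pm r t A (S j) ltac:(auto) ltac:(lia)) as [H1|H1]; lia.
Qed.
End MAIN.

Fixpoint vadd (a b : list nat) : list nat :=
  match a, b with [], _ => b | _, [] => a | x :: a', y :: b' => (x + y) :: vadd a' b' end.
Definition unitvec l := repeat 0 (l - 1) ++ [1].
Definition scl (c : CC) (p : cpoly) : cpoly := map (fun ce => (Cmul c (fst ce), snd ce)) p.
Definition mulm (ce : CC * list nat) (q : cpoly) : cpoly :=
  map (fun de => (Cmul (fst ce) (fst de), vadd (snd ce) (snd de))) q.
Definition pmul (p q : cpoly) : cpoly := flat_map (fun ce => mulm ce q) p.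
Fixpoint toP (f : tm) : cpoly :=
  match f with
  | Id => [(C1, [])]
  | Yg l => [(C1, unitvec l)]
  | Cmp f g => pmul (toP f) (toP g)
  | Add f g => toP f ++ toP g
  | Scal c f => scl c (toP f)
  | _ => []
  end.

Lemma vadd_len a b : length (vadd a b) = Nat.max (length a) (length b).
Proof. revert b; induction a; intros [|y b]; simpl; auto. Qed.

Lemma toP_vars m Q : Rt m Q -> in_vars (toP Q) m.
Proof.
  unfold in_vars. induction 1; simpl.
  - repeat constructor. simpl. lia.
  - repeat constructor. simpl. unfold unitvec. rewrite length_app, repeat_length. simpl. lia.
  - unfold pmul. apply Forall_flat_map. rewrite Forall_forall in *. intros ce Hce.
    unfold mulm. apply Forall_map. apply Forall_forall. intros de Hde. simpl. rewrite vadd_len.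
    specialize (IHRt1 ce Hce). specialize (IHRt2 de Hde). lia.
  - apply Forall_app; auto.
  - unfold scl. apply Forall_map. rewrite Forall_forall in *. intros ce Hce. simpl. auto.
Qed.

Lemma in_vars_mono p m n : in_vars p m -> m <= n -> in_vars p n.
Proof. intros H Hm. unfold in_vars in *. rewrite Forall_forall in *. intros a Ha. specialize (H a Ha). lia. Qed.

Lemma Cmul_comm a b : Cmul a b = Cmul b a.
Proof. destruct a, b. unfold Cmul; simpl. f_equal; ring. Qed.

Section POLY.
Variables (r t : nat) (om : nat -> CC).
Notation E := (eqv r t om).
Notation SQ := (in_Seq r t).
Ltac lin c := eapply E_lin; [assumption | apply c | ty | ty].
Ltac tr := eapply ev_trans.
Variable X : list Z.
Hypothesis HX : SQ X.

Lemma tgt_mono_aux es : forall j, 1 <= j -> j + length es <= length X + 1 -> tgt X (mono_aux j es) = Some X.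
Proof. induction es; intros j H1 H2; cbn [mono_aux tgt]; auto. simpl in H2. rewrite IHes by lia. ty. Qed.

Lemma Rt_mono_aux es : forall j, 1 <= j -> j + length es <= length X + 1 -> Rt (length X) (mono_aux j es).
Proof. induction es; intros j H1 H2; cbn [mono_aux]. constructor. simpl in H2.
  constructor. apply Rt_pw. lia. apply IHes; lia. Qed.

Lemma pw_add f n m : tgt X f = Some X -> E X (Cmp (pw f n) (pw f m)) (pw f (n + m)).
Proof. intros Hf. induction n; cbn [pw Nat.add].
  - lin la_idl.
  - tr. apply ev_sym. lin la_assoc. eapply E_cmpR. exact IHn. ty. ty. Qed.

Lemma mono_mul e1 : forall e2 j, 1 <= j -> j + length e1 <= length X + 1 -> j + length e2 <= length X + 1 ->
  E X (Cmp (mono_aux j e1) (mono_aux j e2)) (mono_aux j (vadd e1 e2)).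
Proof.
  induction e1 as [|n e1 IH]; intros e2 j H1 H2 H3.
  - cbn [mono_aux vadd]. assert (tgt X (mono_aux j e2) = Some X) by (apply tgt_mono_aux; lia). lin la_idl.
  - destruct e2 as [|m e2].
    + cbn [mono_aux vadd]. assert (tgt X (mono_aux (j+1) e1) = Some X) by (apply tgt_mono_aux; simpl in *; lia). simpl in H2. lin la_idr.
    + simpl in H2, H3. cbn [mono_aux vadd].
      assert (T1 : tgt X (mono_aux (j+1) e1) = Some X) by (apply tgt_mono_aux; lia).
      assert (T2 : tgt X (mono_aux (j+1) e2) = Some X) by (apply tgt_mono_aux; lia).
      assert (R1 : Rt (length X) (mono_aux (j+1) e1)) by (apply Rt_mono_aux; lia).
      assert (R2 : Rt (length X) (mono_aux (j+1) e2)) by (apply Rt_mono_aux; lia).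
      assert (T3 : tgt X (mono_aux (j+1) (vadd e1 e2)) = Some X) by (apply tgt_mono_aux; [lia | rewrite vadd_len; lia]).
      assert (Hc : E X (Cmp (mono_aux (j+1) e1) (pw (Yg j) m)) (Cmp (pw (Yg j) m) (mono_aux (j+1) e1))).
      { apply comm_Rt_Rt with (m := length X) (m' := length X); auto. apply Rt_pw; lia. }
      assert (Hp : E X (Cmp (pw (Yg j) n) (pw (Yg j) m)) (pw (Yg j) (n + m))) by (apply pw_add; ty).
      assert (HI : E X (Cmp (mono_aux (j+1) e1) (mono_aux (j+1) e2)) (mono_aux (j+1) (vadd e1 e2))) by (apply IH; lia).
      wstart.
      wr 1 [mono_aux (j+1) e1; pw (Yg j) m] [pw (Yg j) m; mono_aux (j+1) e1] Hc.
      wr 0 [pw (Yg j) n; pw (Yg j) m] [pw (Yg j) (n+m)] Hp.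
      wr 1 [mono_aux (j+1) e1; mono_aux (j+1) e2] [mono_aux (j+1) (vadd e1 e2)] HI.
      wdone.
Qed.

Lemma evalp_cons a p : evalp (a :: p) = Add (Scal (fst a) (mono (snd a))) (evalp p).
Proof. reflexivity. Qed.
Lemma evalp_nil : evalp [] = Scal C0 Id.
Proof. reflexivity. Qed.

Lemma tgt_mono es : length es <= length X -> tgt X (mono es) = Some X.
Proof. intros. apply tgt_mono_aux; lia. Qed.

Lemma tgt_evalp p : in_vars p (length X) -> tgt X (evalp p) = Some X.
Proof. induction p as [|a p IH]; intros H; rewrite ?evalp_nil, ?evalp_cons. ty.
  apply Forall_cons_iff in H as [Ha Hp']. assert (T1 := tgt_mono _ Ha). assert (T2 := IH Hp'). ty. Qed.

Lemma zero_cmp f g : tgt X f = Some X -> E X (Cmp f (Scal C0 g)) (Scal C0 Id) -> True.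
Proof. auto. Qed.

Lemma evalp_app p q : in_vars p (length X) -> in_vars q (length X) ->
  E X (evalp (p ++ q)) (Add (evalp p) (evalp q)).
Proof.
  intros Hp Hq. assert (Tq := tgt_evalp q Hq). induction p as [|a p IH].
  - simpl app. rewrite evalp_nil. apply ev_sym. tr. lin la_addC. lin la_add0.
  - apply Forall_cons_iff in Hp as [H1 H2]. assert (Tp := tgt_evalp p H2). assert (Tm := tgt_mono (snd a) H1).
    assert (Tpq : tgt X (evalp (p ++ q)) = Some X) by (apply tgt_evalp; apply Forall_app; auto).
    rewrite <- app_comm_cons, !evalp_cons.
    tr. apply E_add. apply E_refl with (B := X); auto. ty. apply IH; auto. ty.
    lin la_addA.
Qed.

Lemma evalp_scl c p : in_vars p (length X) -> E X (evalp (scl c p)) (Scal c (evalp p)).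
Proof.
  intros Hp. induction p as [|a p IH].
  - unfold scl; cbn [map]. rewrite evalp_nil. tr. 2: apply ev_sym; lin la_scA. replace (Cmul c C0) with C0.
    apply E_refl with (B := X); auto. ty. unfold Cmul, C0. destruct c; simpl. f_equal; ring.
  - apply Forall_cons_iff in Hp as [H1 H2]. assert (Tp := tgt_evalp p H2). assert (Tm := tgt_mono (snd a) H1).
    assert (Tsp : tgt X (evalp (scl c p)) = Some X) by (apply tgt_evalp; unfold scl, in_vars; apply Forall_map;
      eapply Forall_impl; [|exact H2]; auto).
    unfold scl at 1. simpl map. rewrite !evalp_cons. simpl fst. simpl snd. fold (scl c p).
    tr. apply E_add. apply ev_sym. lin la_scA. apply IH; auto. ty.
    apply ev_sym. lin la_scDr.
Qed.

Lemma evalp_mulm c es q : length es <= length X -> in_vars q (length X) ->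
  E X (Cmp (Scal c (mono es)) (evalp q)) (evalp (mulm (c, es) q)).
Proof.
  intros He Hq. assert (Tm := tgt_mono es He). induction q as [|a q IH].
  - unfold mulm; cbn [map]. rewrite evalp_nil. tr. lin la_scl. apply N5 with (B := X); auto; ty.
  - apply Forall_cons_iff in Hq as [H1 H2]. assert (Tq := tgt_evalp q H2). assert (Tm2 := tgt_mono (snd a) H1).
    assert (Rm : Rt (length X) (mono es)) by (apply Rt_mono_aux; lia).
    assert (Rm2 : Rt (length X) (mono (snd a))) by (apply Rt_mono_aux; lia).
    assert (Tv : tgt X (mono (vadd es (snd a))) = Some X) by (apply tgt_mono; rewrite vadd_len; lia).
    assert (Tmq : tgt X (evalp (mulm (c, es) q)) = Some X).
    { apply tgt_evalp. unfold mulm, in_vars. apply Forall_map. eapply Forall_impl; [|exact H2].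
      intros [d e2] Hd. simpl in *. rewrite vadd_len. lia. }
    unfold mulm at 1. simpl map. rewrite !evalp_cons. simpl fst. simpl snd. fold (mulm (c, es) q).
    tr. lin la_distl. apply E_add; [| apply IH; auto | ty].
    tr. lin la_scl. tr. apply E_scal. lin la_scr. tr. lin la_scA. rewrite Cmul_comm.
    apply E_scal. apply mono_mul; simpl; try lia.
Qed.

Lemma in_vars_mulm c es q n : length es <= n -> in_vars q n -> in_vars (mulm (c, es) q) n.
Proof. intros He Hq. unfold mulm, in_vars in *. apply Forall_map. eapply Forall_impl; [|exact Hq].
  intros [d e2] Hd. simpl in *. rewrite vadd_len. lia. Qed.

Lemma in_vars_pmul p q n : in_vars p n -> in_vars q n -> in_vars (pmul p q) n.
Proof. intros Hp Hq. unfold pmul. apply Forall_flat_map. eapply Forall_impl; [|exact Hp].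
  intros [c es] H. apply in_vars_mulm; auto. Qed.

Lemma evalp_pmul p q : in_vars p (length X) -> in_vars q (length X) ->
  E X (Cmp (evalp p) (evalp q)) (evalp (pmul p q)).
Proof.
  intros Hp Hq. assert (Tq := tgt_evalp q Hq). induction p as [|[c es] p IH].
  - unfold pmul; cbn [flat_map]. rewrite evalp_nil. tr. lin la_scr. apply N5 with (B := X); auto; ty.
  - apply Forall_cons_iff in Hp as [H1 H2]. simpl in H1. assert (Tp := tgt_evalp p H2). assert (Tm := tgt_mono es H1).
    assert (V1 := in_vars_mulm c es q _ H1 Hq). assert (V2 := in_vars_pmul p q _ H2 Hq).
    assert (T1 := tgt_evalp _ V1). assert (T2 := tgt_evalp _ V2).
    change (pmul ((c, es) :: p) q) with (mulm (c, es) q ++ pmul p q).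
    rewrite evalp_cons. simpl fst. simpl snd.
    tr. lin la_distr. tr. apply E_add. apply evalp_mulm; auto. apply IH; auto. ty.
    apply ev_sym. apply evalp_app; auto.
Qed.

Lemma mono_unit d : forall j, 1 <= j -> j + d <= length X -> E X (mono_aux j (repeat 0 d ++ [1])) (Yg (j + d)).
Proof.
  induction d; intros j H1 H2.
  - simpl. cbn [mono_aux pw]. replace (j + 0) with j by lia. tr. lin la_idr. lin la_idr.
  - simpl. cbn [mono_aux pw]. replace (j + Datatypes.S d) with (j + 1 + d) by lia.
    assert (T : tgt X (mono_aux (j+1) (repeat 0 d ++ [1])) = Some X).
    { apply tgt_mono_aux. lia. rewrite length_app, repeat_length. simpl. lia. }
    tr. lin la_idl. apply IHd; lia.
Qed.

Lemma toP_correct m Q : Rt m Q -> m <= length X -> E X (evalp (toP Q)) Q.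
Proof.
  intros HQ Hm. assert (HV := toP_vars m Q HQ).
  assert (HV' : in_vars (toP Q) (length X)) by (eapply in_vars_mono; eauto).
  clear HV. induction HQ; cbn [toP] in *.
  - rewrite evalp_cons, evalp_nil. simpl fst. simpl snd. unfold mono. cbn [mono_aux].
    tr. lin la_add0. lin la_sc1.
  - rewrite evalp_cons, evalp_nil. simpl fst. simpl snd.
    assert (Tm : tgt X (mono (unitvec l)) = Some X).
    { apply tgt_mono. unfold unitvec. rewrite length_app, repeat_length. simpl. lia. }
    tr. lin la_add0. tr. lin la_sc1. unfold mono, unitvec.
    replace (Yg l) with (Yg (1 + (l - 1))) by (f_equal; lia). apply mono_unit; lia.
  - assert (V1 : in_vars (toP f) (length X)) by (eapply in_vars_mono; [apply (toP_vars m f HQ1)|lia]).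
    assert (V2 : in_vars (toP g) (length X)) by (eapply in_vars_mono; [apply (toP_vars m g HQ2)|lia]).
    assert (T1 := tgt_evalp _ V1). assert (T2 := tgt_evalp _ V2).
    tr. apply ev_sym. apply evalp_pmul; auto.
    tr. eapply E_cmpR. apply IHHQ2; auto. ty. ty. eapply E_cmpL. apply IHHQ1; auto. auto. ty.
  - apply Forall_app in HV' as [V1 V2].
    assert (T1 := tgt_evalp _ V1). assert (T2 := tgt_evalp _ V2).
    tr. apply evalp_app; auto. apply E_add; auto. ty.
  - assert (V1 : in_vars (toP f) (length X)) by (eapply in_vars_mono; [apply (toP_vars m f HQ)|lia]).
    tr. apply evalp_scl; auto. apply E_scal. auto.
Qed.
End POLY.

Theorem mainTheorem5 (r t : nat) (om : nat -> CC) :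
  exists W : list Z -> nat -> cpoly,
    forall (A : list Z) (i : nat),
      in_Seq r t A -> 1 <= i <= r + t - 1 -> ent A i <> ent A (i + 1) ->
      forall k : nat,
        in_vars (W (firstn i A) k) (i - 1) /\
        eqv r t om A (Cmp (Eg i) (Cmp (pw (Yg i) k) (Eg i)))
                     (Cmp (evalp (W (firstn i A) k)) (Eg i)).
Proof.
  exists (fun P k => toP (proj1_sig (constructive_indefinite_description _ (main r t om (length P) P k)))).
  intros A i HA Hi Hne k.
  assert (HLA : length A = r + t) by apply HA.
  assert (HL : length (firstn i A) = i) by (rewrite length_firstn; lia).
  destruct (constructive_indefinite_description _ (main r t om (length (firstn i A)) (firstn i A) k)) as [Q HQE].
  simpl. rewrite HL in HQE. destruct HQE as (HQ & HE).
  split. apply toP_vars; auto.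
  specialize (HE A HA eq_refl Hi Hne).
  eapply ev_trans. exact HE. eapply E_cmpL. apply ev_sym. apply (toP_correct r t om A HA (i-1)); auto. lia.
  auto. ty.
Qed.
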